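(* Let $a,b,c,d$ be four points on the unit circle, lying in this order along the circle, such that $L[a,b]$ and $L[c,d]$ are not parallel. Let $h$ be a point of the open segment $(b,c)$, and set $g=\mathrm{LIS}[a,b,c,d]$, $j=\mathrm{LIS}[g,h,a,c]$, $k=\mathrm{LIS}[g,h,b,d]$, $l=\mathrm{LIS}[g,h,a,d]$. Then $v_{\mathbb{B}^2}(h,j)=v_{\mathbb{B}^2}(k,l)$ and $v_{\mathbb{B}^2}(h,k)=v_{\mathbb{B}^2}(j,l)$.
   Context: $\mathbb{B}^2$ is the open unit disk in $\mathbb{C}$. For points $p,q,r,s$ with $p\ne q$, $r\ne s$, $\mathrm{LIS}[p,q,r,s]$ denotes the unique intersection point of the line $L[p,q]$ through $p,q$ and the line $L[r,s]$ through $r,s$. The visual angle metric is $v_{\mathbb{B}^2}(x,y)=\sup\{\measuredangle(x,z,y): z\in\partial\mathbb{B}^2\}$, where $\measuredangle(x,z,y)$ is the angle at $z$ between the segments $[z,x]$ and $[z,y]$. *)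

(* Defs.v *)
From Stdlib Require Import Reals.
From Coquelicot Require Import Coquelicot.
Open Scope R_scope.

Definition pt := (R * R)%type.

Definition padd (p q : pt) : pt := (fst p + fst q, snd p + snd q).
Definition psub (p q : pt) : pt := (fst p - fst q, snd p - snd q).
Definition pscale (t : R) (p : pt) : pt := (t * fst p, t * snd p).
Definition dot (p q : pt) : R := fst p * fst q + snd p * snd q.
Definition cross (p q : pt) : R := fst p * snd q - snd p * fst q.
Definition pnorm (p : pt) : R := sqrt (dot p p).

Definition on_unit_circle (z : pt) : Prop := pnorm z = 1.

Definition cis (t : R) : pt := (cos t, sin t).

Definition parallel (p q r s : pt) : Prop := cross (psub q p) (psub s r) = 0.

(* LIS[p,q,r,s]: intersection point of L[p,q] and L[r,s] (for non-parallel
   lines), written via Cramer's rule: p + t (q - p) with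
   t = cross(r - p, s - r) / cross(q - p, s - r). *)
Definition LIS (p q r s : pt) : pt :=
  padd p (pscale (cross (psub r p) (psub s r) / cross (psub q p) (psub s r))
                 (psub q p)).

Definition angle (x z y : pt) : R :=
  acos (dot (psub x z) (psub y z) / (pnorm (psub x z) * pnorm (psub y z))).

Definition vB2 (x y : pt) : R :=
  real (Lub_Rbar (fun t => exists z, on_unit_circle z /\ t = angle x z y)).

(* Main.v *)
Require Import Defs.
From Stdlib Require Import Reals Lra.
From Coquelicot Require Import Coquelicot.
Open Scope R_scope.

Definition fl (p1 p2 q1 q2 x1 x2 : R) := (q1-p1)*(x2-p2) - (q2-p2)*(x1-p1).
Definition cu (d1 d2 e1 e2 : R) := d1*e2 + d2*e1.
Definition cv (d1 d2 e1 e2 : R) := d1*e1 - d2*e2.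
Definition mB a1 a2 b1 b2 c1 c2 d1 d2 :=
  (cu (b1-a1) (b2-a2) (d1-c1) (d2-c2))^2 + (cv (b1-a1) (b2-a2) (d1-c1) (d2-c2))^2.
Definition mpX p1 p2 q1 q2 r1 r2 s1 s2 a1 a2 b1 b2 c1 c2 d1 d2 :=
  - (cu (q1-p1) (q2-p2) (s1-r1) (s2-r2) * cu (b1-a1) (b2-a2) (d1-c1) (d2-c2)
     + cv (q1-p1) (q2-p2) (s1-r1) (s2-r2) * cv (b1-a1) (b2-a2) (d1-c1) (d2-c2)).
Definition lamX p1 p2 q1 q2 r1 r2 s1 s2 a1 a2 b1 b2 c1 c2 d1 d2 :=
  mB a1 a2 b1 b2 c1 c2 d1 d2 * ((q2-p2)*(s2-r2)) +
  mpX p1 p2 q1 q2 r1 r2 s1 s2 a1 a2 b1 b2 c1 c2 d1 d2 * ((b2-a2)*(d2-c2)).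

Lemma pencilA_c a1 a2 b1 b2 c1 c2 d1 d2 x1 x2 :
  a1^2+a2^2 = 1 -> b1^2+b2^2 = 1 -> c1^2+c2^2 = 1 -> d1^2+d2^2 = 1 ->
  mB a1 a2 b1 b2 c1 c2 d1 d2 * (fl a1 a2 d1 d2 x1 x2 * fl b1 b2 c1 c2 x1 x2)
  + mpX a1 a2 d1 d2 b1 b2 c1 c2 a1 a2 b1 b2 c1 c2 d1 d2 * (fl a1 a2 b1 b2 x1 x2 * fl c1 c2 d1 d2 x1 x2)
  = lamX a1 a2 d1 d2 b1 b2 c1 c2 a1 a2 b1 b2 c1 c2 d1 d2 * (x1^2+x2^2-1).
Proof.
  intros Ha Hb Hc Hd.
  assert (E : mB a1 a2 b1 b2 c1 c2 d1 d2 * (fl a1 a2 d1 d2 x1 x2 * fl b1 b2 c1 c2 x1 x2)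
  + mpX a1 a2 d1 d2 b1 b2 c1 c2 a1 a2 b1 b2 c1 c2 d1 d2 * (fl a1 a2 b1 b2 x1 x2 * fl c1 c2 d1 d2 x1 x2)
  - lamX a1 a2 d1 d2 b1 b2 c1 c2 a1 a2 b1 b2 c1 c2 d1 d2 * (x1^2+x2^2-1) = (c2^2*d1*d2*x1*x2 + (-1)*c2^2*d1*d2^2*x1 + c2^2*d1^2 + (-1)*c2^2*d1^2*x2^2 + (-1)*c2^2*d1^3*x1 + (-1)*c2^3*d1*x1*x2 + c2^3*d1*d2*x1 + (-1)*c1*d2^3*x1*x2 + c1*d1*d2^2*x2^2 + (-1)*c1*d1^2*d2*x1*x2 + c1*d1^3*x2^2 + c1*c2*d2^2*x1*x2 + c1*c2*d2^3*x1 + (-2)*c1*c2*d1*d2 + c1*c2*d1^2*x1*x2 + c1*c2*d1^2*d2*x1 + (-1)*c1*c2^2*d2^2*x1 + c1*c2^2*d1*x2^2 + c1^2*d2^2 + (-1)*c1^2*d2^2*x2^2 + c1^2*d1*d2*x1*x2 + (-2)*c1^2*d1^2*x2^2 + (-1)*c1^2*c2*d1*x1*x2 + c1^2*c2*d1*d2*x1 + (-1)*c1^3*d2^2*x1 + c1^3*d1*x2^2 + b2*c2*d1*d2*x1*x2 + (-1)*b2*c2*d1*d2^2*x1 + b2*c2*d1^2 + (-1)*b2*c2*d1^2*x2^2 + (-1)*b2*c2*d1^3*x1 + (-1)*b2*c2^2*d1*x1*x2 + b2*c2^2*d1*d2*x1 + (-1)*b2*c1*d2^2*x1*x2 + (-1)*b2*c1*d1*d2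 + b2*c1*d1*d2*x2^2 + b2*c1*d1*d2^2*x2 + b2*c1*d1^3*x2 + b2*c1*c2*d2*x1*x2 + b2*c1*c2*d2^2*x1 + (-1)*b2*c1*c2*d1 + b2*c1*c2*d1*x2^2 + (-2)*b2*c1*c2*d1*d2*x2 + b2*c1*c2*d1^2*x1 + (-1)*b2*c1*c2^2*d2*x1 + b2*c1*c2^2*d1*x2 + b2*c1^2*d2 + (-1)*b2*c1^2*d2*x2^2 + b2*c1^2*d1*d2*x1 + (-2)*b2*c1^2*d1^2*x2 + (-1)*b2*c1^3*d2*x1 + b2*c1^3*d1*x2 + (-2)*b2^2*d1*d2*x1*x2 + (2)*b2^2*d1*d2^2*x1 + (-2)*b2^2*d1^2 + (2)*b2^2*d1^2*x2^2 + (2)*b2^2*d1^3*x1 + (2)*b2^2*c2*d1*x1*x2 + (-2)*b2^2*c2*d1*d2*x1 + (2)*b2^2*c1*d2*x1*x2 + (4)*b2^2*c1*d1 + (-4)*b2^2*c1*d1*x2^2 + (-2)*b2^2*c1*d1*d2^2 + (-2)*b2^2*c1*d1^2*x1 + (-2)*b2^2*c1*d1^3 + (-2)*b2^2*c1*c2*x1*x2 + (-2)*b2^2*c1*c2*d2*x1 + (4)*b2^2*c1*c2*d1*d2 + (2)*b2^2*c1*c2^2*x1 + (-2)*b2^2*c1*c2^2*d1 + (-2)*b2^2*c1^2 + (2)*b2^2*c1^2*x2^2 + (-2)*b2^2*c1^2*d1*x1 + (4)*b2^2*c1^2*d1^2 + (2)*b2^2*c1^3*x1 + (-2)*b2^2*c1^3*d1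 + b1*d2^3*x1*x2 + (-1)*b1*d1*d2^2*x2^2 + b1*d1^2*d2*x1*x2 + (-1)*b1*d1^3*x2^2 + (-1)*b1*c2*d2^2*x1*x2 + (2)*b1*c2*d1*d2 + (-1)*b1*c2*d1*d2*x2^2 + (-2)*b1*c2*d1^2*x1*x2 + (-1)*b1*c2^2*d2*x1*x2 + (-2)*b1*c2^2*d1 + (2)*b1*c2^2*d1*x2^2 + b1*c2^2*d1*d2^2 + b1*c2^2*d1^2*x1 + b1*c2^2*d1^3 + b1*c2^3*x1*x2 + (-1)*b1*c2^3*d1*d2 + (-2)*b1*c1*d2^2 + (2)*b1*c1*d2^2*x2^2 + b1*c1*d1*d2*x1*x2 + b1*c1*d1^2*x2^2 + (2)*b1*c1*c2*d2 + (-1)*b1*c1*c2*d2*x2^2 + (-1)*b1*c1*c2*d2^3 + b1*c1*c2*d1*x1*x2 + (-2)*b1*c1*c2*d1*d2*x1 + (-1)*b1*c1*c2*d1^2*d2 + (-1)*b1*c1*c2^2*x2^2 + b1*c1*c2^2*d2^2 + (-2)*b1*c1^2*d2*x1*x2 + b1*c1^2*d2^2*x1 + b1*c1^2*d1*x2^2 + b1*c1^2*c2*x1*x2 + (-1)*b1*c1^2*c2*d1*d2 + (-1)*b1*c1^3*x2^2 + b1*c1^3*d2^2 + b1*b2*d2^2*x1*x2 + (-1)*b1*b2*d2^3*x1 + b1*b2*d1*d2 + (-1)*b1*b2*d1*d2^2*x2 + b1*b2*d1^2*x1*x2 + (-1)*b1*b2*d1^2*d2*x1 + (-1)*b1*b2*d1^3*x2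 + (-2)*b1*b2*c2*d2*x1*x2 + b1*b2*c2*d2^2*x1 + (-1)*b1*b2*c2*d1 + b1*b2*c2*d1*d2*x2 + b1*b2*c2*d1*d2^2 + b1*b2*c2*d1^3 + b1*b2*c2^2*x1*x2 + b1*b2*c2^2*d2*x1 + (-2)*b1*b2*c2^2*d1*d2 + (-1)*b1*b2*c2^3*x1 + b1*b2*c2^3*d1 + (-1)*b1*b2*c1*d2 + b1*b2*c1*d2^3 + (-2)*b1*b2*c1*d1*x1*x2 + b1*b2*c1*d1*d2*x1 + b1*b2*c1*d1^2*x2 + b1*b2*c1*d1^2*d2 + b1*b2*c1*c2 + b1*b2*c1*c2*d2*x2 + (-2)*b1*b2*c1*c2*d2^2 + b1*b2*c1*c2*d1*x1 + (-2)*b1*b2*c1*c2*d1^2 + (-1)*b1*b2*c1*c2^2*x2 + b1*b2*c1*c2^2*d2 + b1*b2*c1^2*x1*x2 + b1*b2*c1^2*d1*x2 + (-2)*b1*b2*c1^2*d1*d2 + (-1)*b1*b2*c1^2*c2*x1 + b1*b2*c1^2*c2*d1 + (-1)*b1*b2*c1^3*x2 + b1*b2*c1^3*d2 + (-1)*b1*b2^2*d2^2*x1 + b1*b2^2*d1*d2*x2 + (2)*b1*b2^2*c2*d2*x1 + (-1)*b1*b2^2*c2*d1*x2 + (-1)*b1*b2^2*c2*d1*d2 + (-1)*b1*b2^2*c2^2*x1 + b1*b2^2*c2^2*d1 + (-1)*b1*b2^2*c1*d2*x2 + b1*b2^2*c1*d2^2 + b1*b2^2*c1*c2*x2 + (-1)*b1*b2^2*c1*c2*d2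 + b1^2*d2^2 + (-1)*b1^2*d2^2*x2^2 + (-2)*b1^2*d1*d2*x1*x2 + b1^2*d1^2*x2^2 + (-2)*b1^2*c2*d2 + (2)*b1^2*c2*d2*x2^2 + (2)*b1^2*c2*d1*x1*x2 + (-1)*b1^2*c2*d1*d2*x1 + b1^2*c2*d1^2*x2 + b1^2*c2^2 + (-1)*b1^2*c2^2*x2^2 + b1^2*c2^2*d1*x1 + (-2)*b1^2*c2^2*d1^2 + (2)*b1^2*c1*d2*x1*x2 + b1^2*c1*d2^2*x1 + (-2)*b1^2*c1*d1*x2^2 + (-1)*b1^2*c1*d1*d2*x2 + (-2)*b1^2*c1*c2*x1*x2 + (-1)*b1^2*c1*c2*d2*x1 + (-1)*b1^2*c1*c2*d1*x2 + (4)*b1^2*c1*c2*d1*d2 + b1^2*c1^2*x2^2 + b1^2*c1^2*d2*x2 + (-2)*b1^2*c1^2*d2^2 + (-1)*b1^3*d2^2*x1 + b1^3*d1*d2*x2 + (2)*b1^3*c2*d2*x1 + (-1)*b1^3*c2*d1*x2 + (-1)*b1^3*c2*d1*d2 + (-1)*b1^3*c2^2*x1 + b1^3*c2^2*d1 + (-1)*b1^3*c1*d2*x2 + b1^3*c1*d2^2 + b1^3*c1*c2*x2 + (-1)*b1^3*c1*c2*d2 + (-1)*a2*c2*d1*d2*x1*x2 + a2*c2*d1*d2^2*x1 + (-1)*a2*c2*d1^2 + a2*c2*d1^2*x2^2 + a2*c2*d1^3*x1 + a2*c2^2*d1*x1*x2 + (-1)*a2*c2^2*d1*d2*x1 + a2*c1*d2^2*x1*x2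 + a2*c1*d1*d2 + (-1)*a2*c1*d1*d2*x2^2 + (-1)*a2*c1*d1*d2^2*x2 + (-1)*a2*c1*d1^3*x2 + (-1)*a2*c1*c2*d2*x1*x2 + (-1)*a2*c1*c2*d2^2*x1 + a2*c1*c2*d1 + (-1)*a2*c1*c2*d1*x2^2 + (2)*a2*c1*c2*d1*d2*x2 + (-1)*a2*c1*c2*d1^2*x1 + a2*c1*c2^2*d2*x1 + (-1)*a2*c1*c2^2*d1*x2 + (-1)*a2*c1^2*d2 + a2*c1^2*d2*x2^2 + (-1)*a2*c1^2*d1*d2*x1 + (2)*a2*c1^2*d1^2*x2 + a2*c1^3*d2*x1 + (-1)*a2*c1^3*d1*x2 + a2*b2*d1*d2*x1*x2 + (-1)*a2*b2*d1*d2^2*x1 + a2*b2*d1^2 + (-1)*a2*b2*d1^2*x2^2 + (-1)*a2*b2*d1^3*x1 + (-1)*a2*b2*c2*d1*x1*x2 + a2*b2*c2*d1*d2*x1 + (-1)*a2*b2*c1*d2*x1*x2 + (-2)*a2*b2*c1*d1 + (2)*a2*b2*c1*d1*x2^2 + a2*b2*c1*d1*d2^2 + a2*b2*c1*d1^2*x1 + a2*b2*c1*d1^3 + a2*b2*c1*c2*x1*x2 + a2*b2*c1*c2*d2*x1 + (-2)*a2*b2*c1*c2*d1*d2 + (-1)*a2*b2*c1*c2^2*x1 + a2*b2*c1*c2^2*d1 + a2*b2*c1^2 + (-1)*a2*b2*c1^2*x2^2 + a2*b2*c1^2*d1*x1 + (-2)*a2*b2*c1^2*d1^2 + (-1)*a2*b2*c1^3*x1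 + a2*b2*c1^3*d1 + (-1)*a2*b1*d2^2*x1*x2 + (-1)*a2*b1*d1*d2 + a2*b1*d1*d2*x2^2 + a2*b1*d1*d2^2*x2 + a2*b1*d1^3*x2 + (2)*a2*b1*c2*d2*x1*x2 + a2*b1*c2*d1 + (-1)*a2*b1*c2*d1*x2^2 + (-1)*a2*b1*c2*d1*d2*x2 + (-1)*a2*b1*c2*d1*d2^2 + (-1)*a2*b1*c2*d1^3 + (-1)*a2*b1*c2^2*x1*x2 + a2*b1*c2^2*d1*d2 + a2*b1*c1*d2 + (-1)*a2*b1*c1*d2*x2^2 + (-1)*a2*b1*c1*d1^2*x2 + (-1)*a2*b1*c1*c2 + a2*b1*c1*c2*x2^2 + (-1)*a2*b1*c1*c2*d2*x2 + a2*b1*c1*c2*d2^2 + a2*b1*c1*c2*d1^2 + a2*b1*c1*c2^2*x2 + (-1)*a2*b1*c1*c2^2*d2 + (-1)*a2*b1*c1^2*d1*x2 + a2*b1*c1^2*d1*d2 + a2*b1*c1^3*x2 + (-1)*a2*b1*c1^3*d2 + a2*b1*b2*d2^2*x1 + (-1)*a2*b1*b2*d1*d2*x2 + (-2)*a2*b1*b2*c2*d2*x1 + a2*b1*b2*c2*d1*x2 + a2*b1*b2*c2*d1*d2 + a2*b1*b2*c2^2*x1 + (-1)*a2*b1*b2*c2^2*d1 + a2*b1*b2*c1*d2*x2 + (-1)*a2*b1*b2*c1*d2^2 + (-1)*a2*b1*b2*c1*c2*x2 + a2*b1*b2*c1*c2*d2 + a2*b1^2*d1*d2*x1 + (-1)*a2*b1^2*d1^2*x2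 + (-1)*a2*b1^2*c2*d1*x1 + a2*b1^2*c2*d1^2 + (-1)*a2*b1^2*c1*d2*x1 + (2)*a2*b1^2*c1*d1*x2 + (-1)*a2*b1^2*c1*d1*d2 + a2*b1^2*c1*c2*x1 + (-1)*a2*b1^2*c1*c2*d1 + (-1)*a2*b1^2*c1^2*x2 + a2*b1^2*c1^2*d2 + (-1)*a1*c2*d2^3*x1 + a1*c2*d1*d2*x2^2 + a1*c2*d1^2*x1*x2 + (-1)*a1*c2*d1^2*d2*x1 + (2)*a1*c2^2*d2^2*x1 + (-1)*a1*c2^2*d1*x2^2 + (-1)*a1*c2^2*d1*d2*x2 + (-1)*a1*c2^3*d2*x1 + a1*c2^3*d1*x2 + (-1)*a1*c1*d2^2*x2^2 + a1*c1*d2^3*x2 + (-1)*a1*c1*d1*d2*x1*x2 + a1*c1*d1^2*d2*x2 + a1*c1*c2*d2*x2^2 + (-1)*a1*c1*c2*d2^2*x2 + (-1)*a1*c1*c2*d1*x1*x2 + (2)*a1*c1*c2*d1*d2*x1 + (-1)*a1*c1*c2*d1^2*x2 + a1*c1^2*d2*x1*x2 + (-1)*a1*c1^2*d1*d2*x2 + (-1)*a1*c1^2*c2*d2*x1 + a1*c1^2*c2*d1*x2 + a1*b2*d2^3*x1 + (-1)*a1*b2*d1*d2*x2^2 + (-1)*a1*b2*d1^2*x1*x2 + a1*b2*d1^2*d2*x1 + (-1)*a1*b2*c2*d2^2*x1 + a1*b2*c2*d1*x2^2 + (-1)*a1*b2*c2^2*d2*x1 + a1*b2*c2^2*d1*d2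 + a1*b2*c2^3*x1 + (-1)*a1*b2*c2^3*d1 + a1*b2*c1*d2*x2^2 + (-1)*a1*b2*c1*d2^3 + (2)*a1*b2*c1*d1*x1*x2 + (-1)*a1*b2*c1*d1*d2*x1 + (-1)*a1*b2*c1*d1^2*d2 + (-1)*a1*b2*c1*c2*x2^2 + a1*b2*c1*c2*d2^2 + (-1)*a1*b2*c1*c2*d1*x1 + a1*b2*c1*c2*d1^2 + (-1)*a1*b2*c1^2*x1*x2 + a1*b2*c1^2*d1*d2 + a1*b2*c1^2*c2*x1 + (-1)*a1*b2*c1^2*c2*d1 + (-1)*a1*b2^2*d2^2*x1 + a1*b2^2*d1*d2*x2 + (2)*a1*b2^2*c2*d2*x1 + (-1)*a1*b2^2*c2*d1*x2 + (-1)*a1*b2^2*c2*d1*d2 + (-1)*a1*b2^2*c2^2*x1 + a1*b2^2*c2^2*d1 + (-1)*a1*b2^2*c1*d2*x2 + a1*b2^2*c1*d2^2 + a1*b2^2*c1*c2*x2 + (-1)*a1*b2^2*c1*c2*d2 + a1*b1*d2^2*x2^2 + (-1)*a1*b1*d2^3*x2 + a1*b1*d1*d2*x1*x2 + (-1)*a1*b1*d1^2*d2*x2 + (-2)*a1*b1*c2*d2*x2^2 + a1*b1*c2*d2^2*x2 + a1*b1*c2*d2^3 + (-1)*a1*b1*c2*d1*x1*x2 + a1*b1*c2*d1^2*d2 + a1*b1*c2^2*x2^2 + a1*b1*c2^2*d2*x2 + (-2)*a1*b1*c2^2*d2^2 + (-1)*a1*b1*c2^3*x2 + a1*b1*c2^3*d2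 + (-1)*a1*b1*c1*d2*x1*x2 + a1*b1*c1*d1*d2*x2 + a1*b1*c1*c2*x1*x2 + a1*b1*c1*c2*d1*x2 + (-2)*a1*b1*c1*c2*d1*d2 + (-1)*a1*b1*c1^2*c2*x2 + a1*b1*c1^2*c2*d2 + (-1)*a1*b1*b2*d1*d2*x1 + a1*b1*b2*d1^2*x2 + a1*b1*b2*c2*d1*x1 + (-1)*a1*b1*b2*c2*d1^2 + a1*b1*b2*c1*d2*x1 + (-2)*a1*b1*b2*c1*d1*x2 + a1*b1*b2*c1*d1*d2 + (-1)*a1*b1*b2*c1*c2*x1 + a1*b1*b2*c1*c2*d1 + a1*b1*b2*c1^2*x2 + (-1)*a1*b1*b2*c1^2*d2)*(a1^2+a2^2-1) + ((-2)*d1*d2*x1*x2 + (2)*d1*d2^2*x1 + (-2)*d1^2 + (2)*d1^2*x2^2 + (2)*d1^3*x1 + (2)*c2*d1*x1*x2 + (-2)*c2*d1*d2*x1 + c2^2*d1*d2*x1*x2 + (-1)*c2^2*d1*d2^2*x1 + c2^2*d1^2 + (-1)*c2^2*d1^2*x2^2 + (-1)*c2^2*d1^3*x1 + (-1)*c2^3*d1*x1*x2 + c2^3*d1*d2*x1 + (2)*c1*d2*x1*x2 + (-1)*c1*d2^3*x1*x2 + (4)*c1*d1 + (-4)*c1*d1*x2^2 + (-2)*c1*d1*d2^2 + c1*d1*d2^2*x2^2 + (-2)*c1*d1^2*x1 + (-1)*c1*d1^2*d2*x1*x2 + (-2)*c1*d1^3 + c1*d1^3*x2^2 + (-2)*c1*c2*x1*x2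 + (-2)*c1*c2*d2*x1 + c1*c2*d2^2*x1*x2 + c1*c2*d2^3*x1 + (2)*c1*c2*d1*d2 + c1*c2*d1^2*x1*x2 + c1*c2*d1^2*d2*x1 + (2)*c1*c2^2*x1 + (-1)*c1*c2^2*d2^2*x1 + (-2)*c1*c2^2*d1 + c1*c2^2*d1*x2^2 + (-2)*c1^2 + (2)*c1^2*x2^2 + c1^2*d2^2 + (-1)*c1^2*d2^2*x2^2 + (-2)*c1^2*d1*x1 + c1^2*d1*d2*x1*x2 + (4)*c1^2*d1^2 + (-2)*c1^2*d1^2*x2^2 + (-1)*c1^2*c2*d1*x1*x2 + c1^2*c2*d1*d2*x1 + (2)*c1^3*x1 + (-1)*c1^3*d2^2*x1 + (-2)*c1^3*d1 + c1^3*d1*x2^2 + (-1)*b2*c2*d1*d2*x1*x2 + b2*c2*d1*d2^2*x1 + (-1)*b2*c2*d1^2 + b2*c2*d1^2*x2^2 + b2*c2*d1^3*x1 + b2*c2^2*d1*x1*x2 + (-1)*b2*c2^2*d1*d2*x1 + b2*c1*d2^2*x1*x2 + b2*c1*d1*d2 + (-1)*b2*c1*d1*d2*x2^2 + (-1)*b2*c1*d1*d2^2*x2 + (-1)*b2*c1*d1^3*x2 + (-1)*b2*c1*c2*d2*x1*x2 + (-1)*b2*c1*c2*d2^2*x1 + b2*c1*c2*d1 + (-1)*b2*c1*c2*d1*x2^2 + (2)*b2*c1*c2*d1*d2*x2 + (-1)*b2*c1*c2*d1^2*x1 + b2*c1*c2^2*d2*x1 + (-1)*b2*c1*c2^2*d1*x2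 + (-1)*b2*c1^2*d2 + b2*c1^2*d2*x2^2 + (-1)*b2*c1^2*d1*d2*x1 + (2)*b2*c1^2*d1^2*x2 + b2*c1^3*d2*x1 + (-1)*b2*c1^3*d1*x2 + (-1)*b1*d2^2*x1 + b1*d1*d2*x2 + (2)*b1*c2*d2*x1 + (-1)*b1*c2*d2^3*x1 + (-1)*b1*c2*d1*x2 + (-1)*b1*c2*d1*d2 + b1*c2*d1*d2*x2^2 + b1*c2*d1^2*x1*x2 + (-1)*b1*c2*d1^2*d2*x1 + (-1)*b1*c2^2*x1 + (2)*b1*c2^2*d2^2*x1 + b1*c2^2*d1 + (-1)*b1*c2^2*d1*x2^2 + (-1)*b1*c2^2*d1*d2*x2 + (-1)*b1*c2^3*d2*x1 + b1*c2^3*d1*x2 + (-1)*b1*c1*d2*x2 + b1*c1*d2^2 + (-1)*b1*c1*d2^2*x2^2 + b1*c1*d2^3*x2 + (-1)*b1*c1*d1*d2*x1*x2 + b1*c1*d1^2*d2*x2 + b1*c1*c2*x2 + (-1)*b1*c1*c2*d2 + b1*c1*c2*d2*x2^2 + (-1)*b1*c1*c2*d2^2*x2 + (-1)*b1*c1*c2*d1*x1*x2 + (2)*b1*c1*c2*d1*d2*x1 + (-1)*b1*c1*c2*d1^2*x2 + b1*c1^2*d2*x1*x2 + (-1)*b1*c1^2*d1*d2*x2 + (-1)*b1*c1^2*c2*d2*x1 + b1*c1^2*c2*d1*x2 + a2*c2*d1*d2*x1*x2 + (-1)*a2*c2*d1*d2^2*x1 + a2*c2*d1^2 + (-1)*a2*c2*d1^2*x2^2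 + (-1)*a2*c2*d1^3*x1 + (-1)*a2*c2^2*d1*x1*x2 + a2*c2^2*d1*d2*x1 + (-1)*a2*c1*d2^2*x1*x2 + (-1)*a2*c1*d1*d2 + a2*c1*d1*d2*x2^2 + a2*c1*d1*d2^2*x2 + a2*c1*d1^3*x2 + a2*c1*c2*d2*x1*x2 + a2*c1*c2*d2^2*x1 + (-1)*a2*c1*c2*d1 + a2*c1*c2*d1*x2^2 + (-2)*a2*c1*c2*d1*d2*x2 + a2*c1*c2*d1^2*x1 + (-1)*a2*c1*c2^2*d2*x1 + a2*c1*c2^2*d1*x2 + a2*c1^2*d2 + (-1)*a2*c1^2*d2*x2^2 + a2*c1^2*d1*d2*x1 + (-2)*a2*c1^2*d1^2*x2 + (-1)*a2*c1^3*d2*x1 + a2*c1^3*d1*x2 + a2*b2*d1*d2*x1*x2 + (-1)*a2*b2*d1*d2^2*x1 + a2*b2*d1^2 + (-1)*a2*b2*d1^2*x2^2 + (-1)*a2*b2*d1^3*x1 + (-1)*a2*b2*c2*d1*x1*x2 + a2*b2*c2*d1*d2*x1 + (-1)*a2*b2*c1*d2*x1*x2 + (-2)*a2*b2*c1*d1 + (2)*a2*b2*c1*d1*x2^2 + a2*b2*c1*d1*d2^2 + a2*b2*c1*d1^2*x1 + a2*b2*c1*d1^3 + a2*b2*c1*c2*x1*x2 + a2*b2*c1*c2*d2*x1 + (-2)*a2*b2*c1*c2*d1*d2 + (-1)*a2*b2*c1*c2^2*x1 + a2*b2*c1*c2^2*d1 + a2*b2*c1^2 + (-1)*a2*b2*c1^2*x2^2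 + a2*b2*c1^2*d1*x1 + (-2)*a2*b2*c1^2*d1^2 + (-1)*a2*b2*c1^3*x1 + a2*b2*c1^3*d1 + a2*b1*d2^3*x1 + (-1)*a2*b1*d1*d2*x2^2 + (-1)*a2*b1*d1^2*x1*x2 + a2*b1*d1^2*d2*x1 + (-1)*a2*b1*c2*d2^2*x1 + a2*b1*c2*d1*x2^2 + (-1)*a2*b1*c2^2*d2*x1 + a2*b1*c2^2*d1*d2 + a2*b1*c2^3*x1 + (-1)*a2*b1*c2^3*d1 + a2*b1*c1*d2*x2^2 + (-1)*a2*b1*c1*d2^3 + (2)*a2*b1*c1*d1*x1*x2 + (-1)*a2*b1*c1*d1*d2*x1 + (-1)*a2*b1*c1*d1^2*d2 + (-1)*a2*b1*c1*c2*x2^2 + a2*b1*c1*c2*d2^2 + (-1)*a2*b1*c1*c2*d1*x1 + a2*b1*c1*c2*d1^2 + (-1)*a2*b1*c1^2*x1*x2 + a2*b1*c1^2*d1*d2 + a2*b1*c1^2*c2*x1 + (-1)*a2*b1*c1^2*c2*d1 + (-1)*a1*d2^2*x1 + a1*d2^3*x1*x2 + a1*d1*d2*x2 + (-1)*a1*d1*d2^2*x2^2 + a1*d1^2*d2*x1*x2 + (-1)*a1*d1^3*x2^2 + (2)*a1*c2*d2*x1 + (-1)*a1*c2*d2^2*x1*x2 + (-1)*a1*c2*d1*x2 + a1*c2*d1*d2 + (-1)*a1*c2*d1*d2*x2^2 + (-2)*a1*c2*d1^2*x1*x2 + (-1)*a1*c2^2*x1 + (-1)*a1*c2^2*d2*x1*x2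 + (-1)*a1*c2^2*d1 + (2)*a1*c2^2*d1*x2^2 + a1*c2^2*d1*d2^2 + a1*c2^2*d1^2*x1 + a1*c2^2*d1^3 + a1*c2^3*x1*x2 + (-1)*a1*c2^3*d1*d2 + (-1)*a1*c1*d2*x2 + (-1)*a1*c1*d2^2 + (2)*a1*c1*d2^2*x2^2 + a1*c1*d1*d2*x1*x2 + a1*c1*d1^2*x2^2 + a1*c1*c2*x2 + a1*c1*c2*d2 + (-1)*a1*c1*c2*d2*x2^2 + (-1)*a1*c1*c2*d2^3 + a1*c1*c2*d1*x1*x2 + (-2)*a1*c1*c2*d1*d2*x1 + (-1)*a1*c1*c2*d1^2*d2 + (-1)*a1*c1*c2^2*x2^2 + a1*c1*c2^2*d2^2 + (-2)*a1*c1^2*d2*x1*x2 + a1*c1^2*d2^2*x1 + a1*c1^2*d1*x2^2 + a1*c1^2*c2*x1*x2 + (-1)*a1*c1^2*c2*d1*d2 + (-1)*a1*c1^3*x2^2 + a1*c1^3*d2^2 + (-1)*a1*b2*d2^2*x1*x2 + (-1)*a1*b2*d1*d2 + a1*b2*d1*d2*x2^2 + a1*b2*d1*d2^2*x2 + a1*b2*d1^3*x2 + (2)*a1*b2*c2*d2*x1*x2 + a1*b2*c2*d1 + (-1)*a1*b2*c2*d1*x2^2 + (-1)*a1*b2*c2*d1*d2*x2 + (-1)*a1*b2*c2*d1*d2^2 + (-1)*a1*b2*c2*d1^3 + (-1)*a1*b2*c2^2*x1*x2 + a1*b2*c2^2*d1*d2 + a1*b2*c1*d2 + (-1)*a1*b2*c1*d2*x2^2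 + (-1)*a1*b2*c1*d1^2*x2 + (-1)*a1*b2*c1*c2 + a1*b2*c1*c2*x2^2 + (-1)*a1*b2*c1*c2*d2*x2 + a1*b2*c1*c2*d2^2 + a1*b2*c1*c2*d1^2 + a1*b2*c1*c2^2*x2 + (-1)*a1*b2*c1*c2^2*d2 + (-1)*a1*b2*c1^2*d1*x2 + a1*b2*c1^2*d1*d2 + a1*b2*c1^3*x2 + (-1)*a1*b2*c1^3*d2 + a1*b1*d2^2*x2^2 + (-1)*a1*b1*d2^3*x2 + a1*b1*d1*d2*x1*x2 + (-1)*a1*b1*d1^2*d2*x2 + (-2)*a1*b1*c2*d2*x2^2 + a1*b1*c2*d2^2*x2 + a1*b1*c2*d2^3 + (-1)*a1*b1*c2*d1*x1*x2 + a1*b1*c2*d1^2*d2 + a1*b1*c2^2*x2^2 + a1*b1*c2^2*d2*x2 + (-2)*a1*b1*c2^2*d2^2 + (-1)*a1*b1*c2^3*x2 + a1*b1*c2^3*d2 + (-1)*a1*b1*c1*d2*x1*x2 + a1*b1*c1*d1*d2*x2 + a1*b1*c1*c2*x1*x2 + a1*b1*c1*c2*d1*x2 + (-2)*a1*b1*c1*c2*d1*d2 + (-1)*a1*b1*c1^2*c2*x2 + a1*b1*c1^2*c2*d2 + a1*a2*d2^2*x1*x2 + (-1)*a1*a2*d2^3*x1 + a1*a2*d1*d2 + (-1)*a1*a2*d1*d2^2*x2 + a1*a2*d1^2*x1*x2 + (-1)*a1*a2*d1^2*d2*x1 + (-1)*a1*a2*d1^3*x2 + (-2)*a1*a2*c2*d2*x1*x2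 + a1*a2*c2*d2^2*x1 + (-1)*a1*a2*c2*d1 + a1*a2*c2*d1*d2*x2 + a1*a2*c2*d1*d2^2 + a1*a2*c2*d1^3 + a1*a2*c2^2*x1*x2 + a1*a2*c2^2*d2*x1 + (-2)*a1*a2*c2^2*d1*d2 + (-1)*a1*a2*c2^3*x1 + a1*a2*c2^3*d1 + (-1)*a1*a2*c1*d2 + a1*a2*c1*d2^3 + (-2)*a1*a2*c1*d1*x1*x2 + a1*a2*c1*d1*d2*x1 + a1*a2*c1*d1^2*x2 + a1*a2*c1*d1^2*d2 + a1*a2*c1*c2 + a1*a2*c1*c2*d2*x2 + (-2)*a1*a2*c1*c2*d2^2 + a1*a2*c1*c2*d1*x1 + (-2)*a1*a2*c1*c2*d1^2 + (-1)*a1*a2*c1*c2^2*x2 + a1*a2*c1*c2^2*d2 + a1*a2*c1^2*x1*x2 + a1*a2*c1^2*d1*x2 + (-2)*a1*a2*c1^2*d1*d2 + (-1)*a1*a2*c1^2*c2*x1 + a1*a2*c1^2*c2*d1 + (-1)*a1*a2*c1^3*x2 + a1*a2*c1^3*d2 + a1*a2*b2*d2^2*x1 + (-1)*a1*a2*b2*d1*d2*x2 + (-2)*a1*a2*b2*c2*d2*x1 + a1*a2*b2*c2*d1*x2 + a1*a2*b2*c2*d1*d2 + a1*a2*b2*c2^2*x1 + (-1)*a1*a2*b2*c2^2*d1 + a1*a2*b2*c1*d2*x2 + (-1)*a1*a2*b2*c1*d2^2 + (-1)*a1*a2*b2*c1*c2*x2 + a1*a2*b2*c1*c2*d2 + (-1)*a1*a2*b1*d1*d2*x1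 + a1*a2*b1*d1^2*x2 + a1*a2*b1*c2*d1*x1 + (-1)*a1*a2*b1*c2*d1^2 + a1*a2*b1*c1*d2*x1 + (-2)*a1*a2*b1*c1*d1*x2 + a1*a2*b1*c1*d1*d2 + (-1)*a1*a2*b1*c1*c2*x1 + a1*a2*b1*c1*c2*d1 + a1*a2*b1*c1^2*x2 + (-1)*a1*a2*b1*c1^2*d2 + a1^2*d2^2 + (-1)*a1^2*d2^2*x2^2 + (-2)*a1^2*d1*d2^2*x1 + (2)*a1^2*d1^2 + (-1)*a1^2*d1^2*x2^2 + (-2)*a1^2*d1^3*x1 + (-2)*a1^2*c2*d2 + (2)*a1^2*c2*d2*x2^2 + a1^2*c2*d1*d2*x1 + a1^2*c2*d1^2*x2 + a1^2*c2^2 + (-1)*a1^2*c2^2*x2^2 + a1^2*c2^2*d1*x1 + (-2)*a1^2*c2^2*d1^2 + a1^2*c1*d2^2*x1 + (-4)*a1^2*c1*d1 + (2)*a1^2*c1*d1*x2^2 + (-1)*a1^2*c1*d1*d2*x2 + (2)*a1^2*c1*d1*d2^2 + (2)*a1^2*c1*d1^2*x1 + (2)*a1^2*c1*d1^3 + a1^2*c1*c2*d2*x1 + (-1)*a1^2*c1*c2*d1*x2 + (-2)*a1^2*c1*c2^2*x1 + (2)*a1^2*c1*c2^2*d1 + (2)*a1^2*c1^2 + (-1)*a1^2*c1^2*x2^2 + a1^2*c1^2*d2*x2 + (-2)*a1^2*c1^2*d2^2 + (2)*a1^2*c1^2*d1*x1 + (-4)*a1^2*c1^2*d1^2 + (-2)*a1^2*c1^3*x1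 + (2)*a1^2*c1^3*d1 + a1^2*b2*d1*d2*x1 + (-1)*a1^2*b2*d1^2*x2 + (-1)*a1^2*b2*c2*d1*x1 + a1^2*b2*c2*d1^2 + (-1)*a1^2*b2*c1*d2*x1 + (2)*a1^2*b2*c1*d1*x2 + (-1)*a1^2*b2*c1*d1*d2 + a1^2*b2*c1*c2*x1 + (-1)*a1^2*b2*c1*c2*d1 + (-1)*a1^2*b2*c1^2*x2 + a1^2*b2*c1^2*d2 + a1^2*b1*d2^2*x1 + (-1)*a1^2*b1*d1*d2*x2 + (-2)*a1^2*b1*c2*d2*x1 + a1^2*b1*c2*d1*x2 + a1^2*b1*c2*d1*d2 + a1^2*b1*c2^2*x1 + (-1)*a1^2*b1*c2^2*d1 + a1^2*b1*c1*d2*x2 + (-1)*a1^2*b1*c1*d2^2 + (-1)*a1^2*b1*c1*c2*x2 + a1^2*b1*c1*c2*d2)*(b1^2+b2^2-1) + ((2)*d1*d2*x1*x2 + (-2)*d1*d2^2*x1 + (2)*d1^2 + (-2)*d1^2*x2^2 + (-2)*d1^3*x1 + (-2)*c2*d1*x1*x2 + (2)*c2*d1*d2*x1 + (2)*c1*x1 + (-2)*c1*d2^2*x1 + (-2)*c1*d1 + (2)*c1*d1*x2^2 + (-1)*b1*x1 + (-1)*b1*d2*x1*x2 + (2)*b1*d2^2*x1 + (-1)*b1*d1 + b1*d1*x2^2 + (-1)*b1*d1*d2*x2 + b1*d1*d2^2 + b1*d1^2*x1 + b1*d1^3 + b1*c2*x1*x2 + (-1)*b1*c2*d2*x1 + b1*c2*d1*x2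 + (-1)*b1*c2*d1*d2 + (-1)*b1*c1*x2^2 + b1*c1*d2^2 + b1*b2*x1*x2 + b1*b2*d2*x1 + (-2)*b1*b2*d2^2*x1*x2 + (-1)*b1*b2*d1*d2 + b1*b2*d1*d2^2*x2 + (-2)*b1*b2*d1^2*x1*x2 + b1*b2*d1^3*x2 + (-1)*b1*b2*c2*x1 + b1*b2*c2*d2*x1*x2 + b1*b2*c2*d1*x2^2 + (-1)*b1*b2*c2*d1*d2*x2 + b1*b2*c2*d1^2*x1 + (-1)*b1*b2*c1*x2 + b1*b2*c1*d2 + (-1)*b1*b2*c1*d2*x2^2 + b1*b2*c1*d2^2*x2 + b1*b2*c1*d1*x1*x2 + (-1)*b1*b2*c1*d1*d2*x1 + b1^2 + (-1)*b1^2*x2^2 + (-2)*b1^2*d2^2 + (2)*b1^2*d2^2*x2^2 + b1^2*d1*x1 + b1^2*d1*d2^2*x1 + (-3)*b1^2*d1^2 + (2)*b1^2*d1^2*x2^2 + b1^2*d1^3*x1 + b1^2*c2*d2 + (-1)*b1^2*c2*d2*x2^2 + b1^2*c2*d1*x1*x2 + (-1)*b1^2*c2*d1*d2*x1 + (-1)*b1^2*c2*d1^2*x2 + (-2)*b1^2*c1*x1 + (-1)*b1^2*c1*d2*x1*x2 + b1^2*c1*d2^2*x1 + (2)*b1^2*c1*d1 + (-1)*b1^2*c1*d1*x2^2 + b1^2*c1*d1*d2*x2 + (-2)*a2*b2*d1*d2*x1*x2 + (2)*a2*b2*d1*d2^2*x1 + (-2)*a2*b2*d1^2 + (2)*a2*b2*d1^2*x2^2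 + (2)*a2*b2*d1^3*x1 + (2)*a2*b2*c2*d1*x1*x2 + (-2)*a2*b2*c2*d1*d2*x1 + (-2)*a2*b2*c1*x1 + (2)*a2*b2*c1*d2^2*x1 + (2)*a2*b2*c1*d1 + (-2)*a2*b2*c1*d1*x2^2 + (-1)*a2*b1*x1*x2 + (-1)*a2*b1*d2*x1 + (2)*a2*b1*d2^2*x1*x2 + a2*b1*d1*d2 + (-1)*a2*b1*d1*d2^2*x2 + (2)*a2*b1*d1^2*x1*x2 + (-1)*a2*b1*d1^3*x2 + a2*b1*c2*x1 + (-1)*a2*b1*c2*d2*x1*x2 + (-1)*a2*b1*c2*d1*x2^2 + a2*b1*c2*d1*d2*x2 + (-1)*a2*b1*c2*d1^2*x1 + a2*b1*c1*x2 + (-1)*a2*b1*c1*d2 + a2*b1*c1*d2*x2^2 + (-1)*a2*b1*c1*d2^2*x2 + (-1)*a2*b1*c1*d1*x1*x2 + a2*b1*c1*d1*d2*x1 + a2*b1*b2*x1 + a2*b1*b2*d2*x1*x2 + (-2)*a2*b1*b2*d2^2*x1 + a2*b1*b2*d1 + (-1)*a2*b1*b2*d1*x2^2 + a2*b1*b2*d1*d2*x2 + (-1)*a2*b1*b2*d1*d2^2 + (-1)*a2*b1*b2*d1^2*x1 + (-1)*a2*b1*b2*d1^3 + (-1)*a2*b1*b2*c2*x1*x2 + a2*b1*b2*c2*d2*x1 + (-1)*a2*b1*b2*c2*d1*x2 + a2*b1*b2*c2*d1*d2 + a2*b1*b2*c1*x2^2 + (-1)*a2*b1*b2*c1*d2^2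 + a2*b1^2*d2 + (-1)*a2*b1^2*d2*x2^2 + (-1)*a2*b1^2*d1*x1*x2 + (-1)*a2*b1^2*d1*d2*x1 + a2*b1^2*d1^2*x2 + (-1)*a2*b1^2*c2 + a2*b1^2*c2*x2^2 + a2*b1^2*c2*d1^2 + a2*b1^2*c1*x1*x2 + a2*b1^2*c1*d2*x1 + (-1)*a2*b1^2*c1*d1*x2 + (-1)*a2*b1^2*c1*d1*d2 + (-1)*a1*x1 + (-1)*a1*d2*x1*x2 + (2)*a1*d2^2*x1 + (-1)*a1*d1 + a1*d1*x2^2 + (-1)*a1*d1*d2*x2 + a1*d1*d2^2 + a1*d1^2*x1 + a1*d1^3 + a1*c2*x1*x2 + (-1)*a1*c2*d2*x1 + a1*c2*d1*x2 + (-1)*a1*c2*d1*d2 + (-1)*a1*c1*x2^2 + a1*c1*d2^2 + (-1)*a1*b2*x1*x2 + (-1)*a1*b2*d2*x1 + (2)*a1*b2*d2^2*x1*x2 + a1*b2*d1*d2 + (-1)*a1*b2*d1*d2^2*x2 + (2)*a1*b2*d1^2*x1*x2 + (-1)*a1*b2*d1^3*x2 + a1*b2*c2*x1 + (-1)*a1*b2*c2*d2*x1*x2 + (-1)*a1*b2*c2*d1*x2^2 + a1*b2*c2*d1*d2*x2 + (-1)*a1*b2*c2*d1^2*x1 + a1*b2*c1*x2 + (-1)*a1*b2*c1*d2 + a1*b2*c1*d2*x2^2 + (-1)*a1*b2*c1*d2^2*x2 + (-1)*a1*b2*c1*d1*x1*x2 + a1*b2*c1*d1*d2*x1 + (2)*a1*b1*x2^2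 + (2)*a1*b1*d2*x2 + (-4)*a1*b1*d2^2*x2^2 + (-2)*a1*b1*d1*d2*x1*x2 + (-2)*a1*b1*d1^2*x2^2 + (-2)*a1*b1*c2*x2 + (2)*a1*b1*c2*d2*x2^2 + (2)*a1*b1*c2*d1^2*x2 + (2)*a1*b1*c1*d2*x1*x2 + (-2)*a1*b1*c1*d1*d2*x2 + (-1)*a1*b1*b2*d2 + a1*b1*b2*d2*x2^2 + a1*b1*b2*d1*x1*x2 + a1*b1*b2*d1*d2*x1 + (-1)*a1*b1*b2*d1^2*x2 + a1*b1*b2*c2 + (-1)*a1*b1*b2*c2*x2^2 + (-1)*a1*b1*b2*c2*d1^2 + (-1)*a1*b1*b2*c1*x1*x2 + (-1)*a1*b1*b2*c1*d2*x1 + a1*b1*b2*c1*d1*x2 + a1*b1*b2*c1*d1*d2 + a1*b1^2*x1 + a1*b1^2*d2*x1*x2 + (-2)*a1*b1^2*d2^2*x1 + a1*b1^2*d1 + (-1)*a1*b1^2*d1*x2^2 + a1*b1^2*d1*d2*x2 + (-1)*a1*b1^2*d1*d2^2 + (-1)*a1*b1^2*d1^2*x1 + (-1)*a1*b1^2*d1^3 + (-1)*a1*b1^2*c2*x1*x2 + a1*b1^2*c2*d2*x1 + (-1)*a1*b1^2*c2*d1*x2 + a1*b1^2*c2*d1*d2 + a1*b1^2*c1*x2^2 + (-1)*a1*b1^2*c1*d2^2 + a1*a2*x1*x2 + a1*a2*d2*x1 + (-2)*a1*a2*d2^2*x1*x2 + (-1)*a1*a2*d1*d2 + a1*a2*d1*d2^2*x2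 + (-2)*a1*a2*d1^2*x1*x2 + a1*a2*d1^3*x2 + (-1)*a1*a2*c2*x1 + a1*a2*c2*d2*x1*x2 + a1*a2*c2*d1*x2^2 + (-1)*a1*a2*c2*d1*d2*x2 + a1*a2*c2*d1^2*x1 + (-1)*a1*a2*c1*x2 + a1*a2*c1*d2 + (-1)*a1*a2*c1*d2*x2^2 + a1*a2*c1*d2^2*x2 + a1*a2*c1*d1*x1*x2 + (-1)*a1*a2*c1*d1*d2*x1 + a1*a2*b2*x1 + a1*a2*b2*d2*x1*x2 + (-2)*a1*a2*b2*d2^2*x1 + a1*a2*b2*d1 + (-1)*a1*a2*b2*d1*x2^2 + a1*a2*b2*d1*d2*x2 + (-1)*a1*a2*b2*d1*d2^2 + (-1)*a1*a2*b2*d1^2*x1 + (-1)*a1*a2*b2*d1^3 + (-1)*a1*a2*b2*c2*x1*x2 + a1*a2*b2*c2*d2*x1 + (-1)*a1*a2*b2*c2*d1*x2 + a1*a2*b2*c2*d1*d2 + a1*a2*b2*c1*x2^2 + (-1)*a1*a2*b2*c1*d2^2 + (-1)*a1*a2*b1*d2 + a1*a2*b1*d2*x2^2 + a1*a2*b1*d1*x1*x2 + a1*a2*b1*d1*d2*x1 + (-1)*a1*a2*b1*d1^2*x2 + a1*a2*b1*c2 + (-1)*a1*a2*b1*c2*x2^2 + (-1)*a1*a2*b1*c2*d1^2 + (-1)*a1*a2*b1*c1*x1*x2 + (-1)*a1*a2*b1*c1*d2*x1 + a1*a2*b1*c1*d1*x2 + a1*a2*b1*c1*d1*d2 + (-2)*a1*a2*b1*b2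 + (-2)*a1*a2*b1*b2*d2*x2 + (4)*a1*a2*b1*b2*d2^2 + (-2)*a1*a2*b1*b2*d1*x1 + (4)*a1*a2*b1*b2*d1^2 + (2)*a1*a2*b1*b2*c2*x2 + (-2)*a1*a2*b1*b2*c2*d2 + (2)*a1*a2*b1*b2*c1*x1 + (-2)*a1*a2*b1*b2*c1*d1 + a1^2 + (-1)*a1^2*x2^2 + (-2)*a1^2*d2^2 + (2)*a1^2*d2^2*x2^2 + a1^2*d1*x1 + a1^2*d1*d2^2*x1 + (-3)*a1^2*d1^2 + (2)*a1^2*d1^2*x2^2 + a1^2*d1^3*x1 + a1^2*c2*d2 + (-1)*a1^2*c2*d2*x2^2 + a1^2*c2*d1*x1*x2 + (-1)*a1^2*c2*d1*d2*x1 + (-1)*a1^2*c2*d1^2*x2 + (-2)*a1^2*c1*x1 + (-1)*a1^2*c1*d2*x1*x2 + a1^2*c1*d2^2*x1 + (2)*a1^2*c1*d1 + (-1)*a1^2*c1*d1*x2^2 + a1^2*c1*d1*d2*x2 + a1^2*b2*d2 + (-1)*a1^2*b2*d2*x2^2 + (-1)*a1^2*b2*d1*x1*x2 + (-1)*a1^2*b2*d1*d2*x1 + a1^2*b2*d1^2*x2 + (-1)*a1^2*b2*c2 + a1^2*b2*c2*x2^2 + a1^2*b2*c2*d1^2 + a1^2*b2*c1*x1*x2 + a1^2*b2*c1*d2*x1 + (-1)*a1^2*b2*c1*d1*x2 + (-1)*a1^2*b2*c1*d1*d2 + a1^2*b1*x1 + a1^2*b1*d2*x1*x2 + (-2)*a1^2*b1*d2^2*x1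 + a1^2*b1*d1 + (-1)*a1^2*b1*d1*x2^2 + a1^2*b1*d1*d2*x2 + (-1)*a1^2*b1*d1*d2^2 + (-1)*a1^2*b1*d1^2*x1 + (-1)*a1^2*b1*d1^3 + (-1)*a1^2*b1*c2*x1*x2 + a1^2*b1*c2*d2*x1 + (-1)*a1^2*b1*c2*d1*x2 + a1^2*b1*c2*d1*d2 + a1^2*b1*c1*x2^2 + (-1)*a1^2*b1*c1*d2^2 + (-2)*a1^2*b1^2 + (-2)*a1^2*b1^2*d2*x2 + (4)*a1^2*b1^2*d2^2 + (-2)*a1^2*b1^2*d1*x1 + (4)*a1^2*b1^2*d1^2 + (2)*a1^2*b1^2*c2*x2 + (-2)*a1^2*b1^2*c2*d2 + (2)*a1^2*b1^2*c1*x1 + (-2)*a1^2*b1^2*c1*d1)*(c1^2+c2^2-1) + ((-2)*c1*x1 + (-2)*c1*d2*x1*x2 + (-2)*c1*d1 + (2)*c1*d1*x2^2 + (2)*c1*c2*x1*x2 + (2)*c1*c2*d2*x1 + (2)*c1^2 + (-2)*c1^2*x2^2 + (2)*c1^2*d1*x1 + b1*x1 + b1*d2*x1*x2 + b1*d1 + (-1)*b1*d1*x2^2 + (-1)*b1*c2*x1*x2 + (-1)*b1*c2*d2*x1 + b1*c1*x2^2 + b1*c1*d2*x2 + (-1)*b1*c1*c2*x2 + (-1)*b1*c1*c2*d2 + (-1)*b1*c1^2*x1 + (-1)*b1*c1^2*d1 + (-1)*b1*b2*x1*x2 + (-1)*b1*b2*d2*x1 + b1*b2*c2*x1 + b1*b2*c2*d2*x1*x2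 + b1*b2*c2*d1 + (-1)*b1*b2*c2*d1*x2^2 + b1*b2*c1*x2 + b1*b2*c1*d2*x2^2 + b1*b2*c1*d1*x1*x2 + (-1)*b1*b2*c1*c2 + (-1)*b1*b2*c1*c2*d2*x2 + (-1)*b1*b2*c1*c2*d1*x1 + b1*b2*c1^2*d2*x1 + (-1)*b1*b2*c1^2*d1*x2 + (-1)*b1^2 + b1^2*x2^2 + (-1)*b1^2*d1*x1 + b1^2*c2*d2 + (-1)*b1^2*c2*d2*x2^2 + (-1)*b1^2*c2*d1*x1*x2 + (2)*b1^2*c1*x1 + b1^2*c1*d2*x1*x2 + (2)*b1^2*c1*d1 + (-1)*b1^2*c1*d1*x2^2 + (-1)*b1^2*c1*c2*d2*x1 + b1^2*c1*c2*d1*x2 + (-1)*b1^2*c1^2 + (-1)*b1^2*c1^2*d2*x2 + (-1)*b1^2*c1^2*d1*x1 + (2)*a2*b2*c1*x1 + (2)*a2*b2*c1*d2*x1*x2 + (2)*a2*b2*c1*d1 + (-2)*a2*b2*c1*d1*x2^2 + (-2)*a2*b2*c1*c2*x1*x2 + (-2)*a2*b2*c1*c2*d2*x1 + (-2)*a2*b2*c1^2 + (2)*a2*b2*c1^2*x2^2 + (-2)*a2*b2*c1^2*d1*x1 + a2*b1*x1*x2 + a2*b1*d2*x1 + (-1)*a2*b1*c2*x1 + (-1)*a2*b1*c2*d2*x1*x2 + (-1)*a2*b1*c2*d1 + a2*b1*c2*d1*x2^2 + (-1)*a2*b1*c1*x2 + (-1)*a2*b1*c1*d2*x2^2 + (-1)*a2*b1*c1*d1*x1*x2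 + a2*b1*c1*c2 + a2*b1*c1*c2*d2*x2 + a2*b1*c1*c2*d1*x1 + (-1)*a2*b1*c1^2*d2*x1 + a2*b1*c1^2*d1*x2 + (-1)*a2*b1*b2*x1 + (-1)*a2*b1*b2*d2*x1*x2 + (-1)*a2*b1*b2*d1 + a2*b1*b2*d1*x2^2 + a2*b1*b2*c2*x1*x2 + a2*b1*b2*c2*d2*x1 + (-1)*a2*b1*b2*c1*x2^2 + (-1)*a2*b1*b2*c1*d2*x2 + a2*b1*b2*c1*c2*x2 + a2*b1*b2*c1*c2*d2 + a2*b1*b2*c1^2*x1 + a2*b1*b2*c1^2*d1 + (-1)*a2*b1^2*d2 + a2*b1^2*d2*x2^2 + a2*b1^2*d1*x1*x2 + a2*b1^2*c2 + (-1)*a2*b1^2*c2*x2^2 + a2*b1^2*c2*d1*x1 + (-1)*a2*b1^2*c1*x1*x2 + (-1)*a2*b1^2*c1*d1*x2 + (-1)*a2*b1^2*c1*c2*x1 + (-1)*a2*b1^2*c1*c2*d1 + a2*b1^2*c1^2*x2 + a2*b1^2*c1^2*d2 + a1*x1 + a1*d2*x1*x2 + a1*d1 + (-1)*a1*d1*x2^2 + (-1)*a1*c2*x1*x2 + (-1)*a1*c2*d2*x1 + a1*c1*x2^2 + a1*c1*d2*x2 + (-1)*a1*c1*c2*x2 + (-1)*a1*c1*c2*d2 + (-1)*a1*c1^2*x1 + (-1)*a1*c1^2*d1 + a1*b2*x1*x2 + a1*b2*d2*x1 + (-1)*a1*b2*c2*x1 + (-1)*a1*b2*c2*d2*x1*x2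 + (-1)*a1*b2*c2*d1 + a1*b2*c2*d1*x2^2 + (-1)*a1*b2*c1*x2 + (-1)*a1*b2*c1*d2*x2^2 + (-1)*a1*b2*c1*d1*x1*x2 + a1*b2*c1*c2 + a1*b2*c1*c2*d2*x2 + a1*b2*c1*c2*d1*x1 + (-1)*a1*b2*c1^2*d2*x1 + a1*b2*c1^2*d1*x2 + (-2)*a1*b1*x2^2 + (-2)*a1*b1*d2*x2 + (2)*a1*b1*c2*x2 + (2)*a1*b1*c2*d2*x2^2 + (2)*a1*b1*c2*d1*x1*x2 + (-2)*a1*b1*c1*c2*x1*x2 + (-2)*a1*b1*c1*c2*d1*x2 + (2)*a1*b1*c1^2*x2^2 + (2)*a1*b1*c1^2*d2*x2 + a1*b1*b2*d2 + (-1)*a1*b1*b2*d2*x2^2 + (-1)*a1*b1*b2*d1*x1*x2 + (-1)*a1*b1*b2*c2 + a1*b1*b2*c2*x2^2 + (-1)*a1*b1*b2*c2*d1*x1 + a1*b1*b2*c1*x1*x2 + a1*b1*b2*c1*d1*x2 + a1*b1*b2*c1*c2*x1 + a1*b1*b2*c1*c2*d1 + (-1)*a1*b1*b2*c1^2*x2 + (-1)*a1*b1*b2*c1^2*d2 + (-1)*a1*b1^2*x1 + (-1)*a1*b1^2*d2*x1*x2 + (-1)*a1*b1^2*d1 + a1*b1^2*d1*x2^2 + a1*b1^2*c2*x1*x2 + a1*b1^2*c2*d2*x1 + (-1)*a1*b1^2*c1*x2^2 + (-1)*a1*b1^2*c1*d2*x2 + a1*b1^2*c1*c2*x2 + a1*b1^2*c1*c2*d2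 + a1*b1^2*c1^2*x1 + a1*b1^2*c1^2*d1 + (-1)*a1*a2*x1*x2 + (-1)*a1*a2*d2*x1 + a1*a2*c2*x1 + a1*a2*c2*d2*x1*x2 + a1*a2*c2*d1 + (-1)*a1*a2*c2*d1*x2^2 + a1*a2*c1*x2 + a1*a2*c1*d2*x2^2 + a1*a2*c1*d1*x1*x2 + (-1)*a1*a2*c1*c2 + (-1)*a1*a2*c1*c2*d2*x2 + (-1)*a1*a2*c1*c2*d1*x1 + a1*a2*c1^2*d2*x1 + (-1)*a1*a2*c1^2*d1*x2 + (-1)*a1*a2*b2*x1 + (-1)*a1*a2*b2*d2*x1*x2 + (-1)*a1*a2*b2*d1 + a1*a2*b2*d1*x2^2 + a1*a2*b2*c2*x1*x2 + a1*a2*b2*c2*d2*x1 + (-1)*a1*a2*b2*c1*x2^2 + (-1)*a1*a2*b2*c1*d2*x2 + a1*a2*b2*c1*c2*x2 + a1*a2*b2*c1*c2*d2 + a1*a2*b2*c1^2*x1 + a1*a2*b2*c1^2*d1 + a1*a2*b1*d2 + (-1)*a1*a2*b1*d2*x2^2 + (-1)*a1*a2*b1*d1*x1*x2 + (-1)*a1*a2*b1*c2 + a1*a2*b1*c2*x2^2 + (-1)*a1*a2*b1*c2*d1*x1 + a1*a2*b1*c1*x1*x2 + a1*a2*b1*c1*d1*x2 + a1*a2*b1*c1*c2*x1 + a1*a2*b1*c1*c2*d1 + (-1)*a1*a2*b1*c1^2*x2 + (-1)*a1*a2*b1*c1^2*d2 + (2)*a1*a2*b1*b2 + (2)*a1*a2*b1*b2*d2*x2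 + (2)*a1*a2*b1*b2*d1*x1 + (-2)*a1*a2*b1*b2*c2*x2 + (-2)*a1*a2*b1*b2*c2*d2 + (-2)*a1*a2*b1*b2*c1*x1 + (-2)*a1*a2*b1*b2*c1*d1 + (-1)*a1^2 + a1^2*x2^2 + (-1)*a1^2*d1*x1 + a1^2*c2*d2 + (-1)*a1^2*c2*d2*x2^2 + (-1)*a1^2*c2*d1*x1*x2 + (2)*a1^2*c1*x1 + a1^2*c1*d2*x1*x2 + (2)*a1^2*c1*d1 + (-1)*a1^2*c1*d1*x2^2 + (-1)*a1^2*c1*c2*d2*x1 + a1^2*c1*c2*d1*x2 + (-1)*a1^2*c1^2 + (-1)*a1^2*c1^2*d2*x2 + (-1)*a1^2*c1^2*d1*x1 + (-1)*a1^2*b2*d2 + a1^2*b2*d2*x2^2 + a1^2*b2*d1*x1*x2 + a1^2*b2*c2 + (-1)*a1^2*b2*c2*x2^2 + a1^2*b2*c2*d1*x1 + (-1)*a1^2*b2*c1*x1*x2 + (-1)*a1^2*b2*c1*d1*x2 + (-1)*a1^2*b2*c1*c2*x1 + (-1)*a1^2*b2*c1*c2*d1 + a1^2*b2*c1^2*x2 + a1^2*b2*c1^2*d2 + (-1)*a1^2*b1*x1 + (-1)*a1^2*b1*d2*x1*x2 + (-1)*a1^2*b1*d1 + a1^2*b1*d1*x2^2 + a1^2*b1*c2*x1*x2 + a1^2*b1*c2*d2*x1 + (-1)*a1^2*b1*c1*x2^2 + (-1)*a1^2*b1*c1*d2*x2 + a1^2*b1*c1*c2*x2 + a1^2*b1*c1*c2*d2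 + a1^2*b1*c1^2*x1 + a1^2*b1*c1^2*d1 + (2)*a1^2*b1^2 + (2)*a1^2*b1^2*d2*x2 + (2)*a1^2*b1^2*d1*x1 + (-2)*a1^2*b1^2*c2*x2 + (-2)*a1^2*b1^2*c2*d2 + (-2)*a1^2*b1^2*c1*x1 + (-2)*a1^2*b1^2*c1*d1)*(d1^2+d2^2-1)).
  { unfold lamX, mpX, mB, fl, cu, cv. ring. }
  assert (Ha' : a1^2+a2^2-1 = 0) by lra. assert (Hb' : b1^2+b2^2-1 = 0) by lra.
  assert (Hc' : c1^2+c2^2-1 = 0) by lra. assert (Hd' : d1^2+d2^2-1 = 0) by lra.
  rewrite Ha', Hb', Hc', Hd' in E. lra.
Qed.

Lemma pencilC_c a1 a2 b1 b2 c1 c2 d1 d2 x1 x2 :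
  a1^2+a2^2 = 1 -> b1^2+b2^2 = 1 -> c1^2+c2^2 = 1 -> d1^2+d2^2 = 1 ->
  mB a1 a2 b1 b2 c1 c2 d1 d2 * (fl a1 a2 c1 c2 x1 x2 * fl b1 b2 d1 d2 x1 x2)
  + mpX a1 a2 c1 c2 b1 b2 d1 d2 a1 a2 b1 b2 c1 c2 d1 d2 * (fl a1 a2 b1 b2 x1 x2 * fl c1 c2 d1 d2 x1 x2)
  = lamX a1 a2 c1 c2 b1 b2 d1 d2 a1 a2 b1 b2 c1 c2 d1 d2 * (x1^2+x2^2-1).
Proof.
  intros Ha Hb Hc Hd.
  assert (E : mB a1 a2 b1 b2 c1 c2 d1 d2 * (fl a1 a2 c1 c2 x1 x2 * fl b1 b2 d1 d2 x1 x2)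
  + mpX a1 a2 c1 c2 b1 b2 d1 d2 a1 a2 b1 b2 c1 c2 d1 d2 * (fl a1 a2 b1 b2 x1 x2 * fl c1 c2 d1 d2 x1 x2)
  - lamX a1 a2 c1 c2 b1 b2 d1 d2 a1 a2 b1 b2 c1 c2 d1 d2 * (x1^2+x2^2-1) = (c2^2*d1*d2*x1*x2 + (-1)*c2^2*d1*d2^2*x1 + c2^2*d1^2 + (-1)*c2^2*d1^2*x2^2 + (-1)*c2^2*d1^3*x1 + (-1)*c2^3*d1*x1*x2 + c2^3*d1*d2*x1 + (-1)*c1*d2^3*x1*x2 + c1*d1*d2^2*x2^2 + (-1)*c1*d1^2*d2*x1*x2 + c1*d1^3*x2^2 + c1*c2*d2^2*x1*x2 + c1*c2*d2^3*x1 + (-2)*c1*c2*d1*d2 + c1*c2*d1^2*x1*x2 + c1*c2*d1^2*d2*x1 + (-1)*c1*c2^2*d2^2*x1 + c1*c2^2*d1*x2^2 + c1^2*d2^2 + (-1)*c1^2*d2^2*x2^2 + c1^2*d1*d2*x1*x2 + (-2)*c1^2*d1^2*x2^2 + (-1)*c1^2*c2*d1*x1*x2 + c1^2*c2*d1*d2*x1 + (-1)*c1^3*d2^2*x1 + c1^3*d1*x2^2 + b2*c2*d1*d2*x1*x2 + (-1)*b2*c2*d1*d2^2*x1 + b2*c2*d1^2 + (-1)*b2*c2*d1^2*x2^2 + (-1)*b2*c2*d1^3*x1 + (-1)*b2*c2^2*d1*x1*x2 + b2*c2^2*d1*d2*x1 + (-1)*b2*c1*d2^2*x1*x2 + (-1)*b2*c1*d1*d2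 + b2*c1*d1*d2*x2^2 + b2*c1*d1*d2^2*x2 + b2*c1*d1^3*x2 + b2*c1*c2*d2*x1*x2 + b2*c1*c2*d2^2*x1 + (-1)*b2*c1*c2*d1 + b2*c1*c2*d1*x2^2 + (-2)*b2*c1*c2*d1*d2*x2 + b2*c1*c2*d1^2*x1 + (-1)*b2*c1*c2^2*d2*x1 + b2*c1*c2^2*d1*x2 + b2*c1^2*d2 + (-1)*b2*c1^2*d2*x2^2 + b2*c1^2*d1*d2*x1 + (-2)*b2*c1^2*d1^2*x2 + (-1)*b2*c1^3*d2*x1 + b2*c1^3*d1*x2 + (-2)*b2^2*d1*d2*x1*x2 + (2)*b2^2*d1*d2^2*x1 + (-2)*b2^2*d1^2 + (2)*b2^2*d1^2*x2^2 + (2)*b2^2*d1^3*x1 + (2)*b2^2*c2*d1*x1*x2 + (-2)*b2^2*c2*d1*d2*x1 + (2)*b2^2*c1*d2*x1*x2 + (4)*b2^2*c1*d1 + (-4)*b2^2*c1*d1*x2^2 + (-2)*b2^2*c1*d1*d2^2 + (-2)*b2^2*c1*d1^2*x1 + (-2)*b2^2*c1*d1^3 + (-2)*b2^2*c1*c2*x1*x2 + (-2)*b2^2*c1*c2*d2*x1 + (4)*b2^2*c1*c2*d1*d2 + (2)*b2^2*c1*c2^2*x1 + (-2)*b2^2*c1*c2^2*d1 + (-2)*b2^2*c1^2 + (2)*b2^2*c1^2*x2^2 + (-2)*b2^2*c1^2*d1*x1 + (4)*b2^2*c1^2*d1^2 + (2)*b2^2*c1^3*x1 + (-2)*b2^2*c1^3*d1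 + b1*d2^3*x1*x2 + (-1)*b1*d1*d2^2*x2^2 + b1*d1^2*d2*x1*x2 + (-1)*b1*d1^3*x2^2 + (-1)*b1*c2*d2^2*x1*x2 + (2)*b1*c2*d1*d2 + (-1)*b1*c2*d1*d2*x2^2 + (-2)*b1*c2*d1^2*x1*x2 + (-1)*b1*c2^2*d2*x1*x2 + (-2)*b1*c2^2*d1 + (2)*b1*c2^2*d1*x2^2 + b1*c2^2*d1*d2^2 + b1*c2^2*d1^2*x1 + b1*c2^2*d1^3 + b1*c2^3*x1*x2 + (-1)*b1*c2^3*d1*d2 + (-2)*b1*c1*d2^2 + (2)*b1*c1*d2^2*x2^2 + b1*c1*d1*d2*x1*x2 + b1*c1*d1^2*x2^2 + (2)*b1*c1*c2*d2 + (-1)*b1*c1*c2*d2*x2^2 + (-1)*b1*c1*c2*d2^3 + b1*c1*c2*d1*x1*x2 + (-2)*b1*c1*c2*d1*d2*x1 + (-1)*b1*c1*c2*d1^2*d2 + (-1)*b1*c1*c2^2*x2^2 + b1*c1*c2^2*d2^2 + (-2)*b1*c1^2*d2*x1*x2 + b1*c1^2*d2^2*x1 + b1*c1^2*d1*x2^2 + b1*c1^2*c2*x1*x2 + (-1)*b1*c1^2*c2*d1*d2 + (-1)*b1*c1^3*x2^2 + b1*c1^3*d2^2 + b1*b2*d2^2*x1*x2 + (-1)*b1*b2*d2^3*x1 + b1*b2*d1*d2 + (-1)*b1*b2*d1*d2^2*x2 + b1*b2*d1^2*x1*x2 + (-1)*b1*b2*d1^2*d2*x1 + (-1)*b1*b2*d1^3*x2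 + (-2)*b1*b2*c2*d2*x1*x2 + b1*b2*c2*d2^2*x1 + (-1)*b1*b2*c2*d1 + b1*b2*c2*d1*d2*x2 + b1*b2*c2*d1*d2^2 + b1*b2*c2*d1^3 + b1*b2*c2^2*x1*x2 + b1*b2*c2^2*d2*x1 + (-2)*b1*b2*c2^2*d1*d2 + (-1)*b1*b2*c2^3*x1 + b1*b2*c2^3*d1 + (-1)*b1*b2*c1*d2 + b1*b2*c1*d2^3 + (-2)*b1*b2*c1*d1*x1*x2 + b1*b2*c1*d1*d2*x1 + b1*b2*c1*d1^2*x2 + b1*b2*c1*d1^2*d2 + b1*b2*c1*c2 + b1*b2*c1*c2*d2*x2 + (-2)*b1*b2*c1*c2*d2^2 + b1*b2*c1*c2*d1*x1 + (-2)*b1*b2*c1*c2*d1^2 + (-1)*b1*b2*c1*c2^2*x2 + b1*b2*c1*c2^2*d2 + b1*b2*c1^2*x1*x2 + b1*b2*c1^2*d1*x2 + (-2)*b1*b2*c1^2*d1*d2 + (-1)*b1*b2*c1^2*c2*x1 + b1*b2*c1^2*c2*d1 + (-1)*b1*b2*c1^3*x2 + b1*b2*c1^3*d2 + (-1)*b1*b2^2*d2^2*x1 + b1*b2^2*d1*d2*x2 + (2)*b1*b2^2*c2*d2*x1 + (-1)*b1*b2^2*c2*d1*x2 + (-1)*b1*b2^2*c2*d1*d2 + (-1)*b1*b2^2*c2^2*x1 + b1*b2^2*c2^2*d1 + (-1)*b1*b2^2*c1*d2*x2 + b1*b2^2*c1*d2^2 + b1*b2^2*c1*c2*x2 + (-1)*b1*b2^2*c1*c2*d2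 + b1^2*d2^2 + (-1)*b1^2*d2^2*x2^2 + (-2)*b1^2*d1*d2*x1*x2 + b1^2*d1^2*x2^2 + (-2)*b1^2*c2*d2 + (2)*b1^2*c2*d2*x2^2 + (2)*b1^2*c2*d1*x1*x2 + (-1)*b1^2*c2*d1*d2*x1 + b1^2*c2*d1^2*x2 + b1^2*c2^2 + (-1)*b1^2*c2^2*x2^2 + b1^2*c2^2*d1*x1 + (-2)*b1^2*c2^2*d1^2 + (2)*b1^2*c1*d2*x1*x2 + b1^2*c1*d2^2*x1 + (-2)*b1^2*c1*d1*x2^2 + (-1)*b1^2*c1*d1*d2*x2 + (-2)*b1^2*c1*c2*x1*x2 + (-1)*b1^2*c1*c2*d2*x1 + (-1)*b1^2*c1*c2*d1*x2 + (4)*b1^2*c1*c2*d1*d2 + b1^2*c1^2*x2^2 + b1^2*c1^2*d2*x2 + (-2)*b1^2*c1^2*d2^2 + (-1)*b1^3*d2^2*x1 + b1^3*d1*d2*x2 + (2)*b1^3*c2*d2*x1 + (-1)*b1^3*c2*d1*x2 + (-1)*b1^3*c2*d1*d2 + (-1)*b1^3*c2^2*x1 + b1^3*c2^2*d1 + (-1)*b1^3*c1*d2*x2 + b1^3*c1*d2^2 + b1^3*c1*c2*x2 + (-1)*b1^3*c1*c2*d2 + (-1)*a2*c2*d1*d2*x1*x2 + a2*c2*d1*d2^2*x1 + (-1)*a2*c2*d1^2 + a2*c2*d1^2*x2^2 + a2*c2*d1^3*x1 + a2*c2^2*d1*x1*x2 + (-1)*a2*c2^2*d1*d2*x1 + a2*c1*d2^2*x1*x2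 + a2*c1*d1*d2 + (-1)*a2*c1*d1*d2*x2^2 + (-1)*a2*c1*d1*d2^2*x2 + (-1)*a2*c1*d1^3*x2 + (-1)*a2*c1*c2*d2*x1*x2 + (-1)*a2*c1*c2*d2^2*x1 + a2*c1*c2*d1 + (-1)*a2*c1*c2*d1*x2^2 + (2)*a2*c1*c2*d1*d2*x2 + (-1)*a2*c1*c2*d1^2*x1 + a2*c1*c2^2*d2*x1 + (-1)*a2*c1*c2^2*d1*x2 + (-1)*a2*c1^2*d2 + a2*c1^2*d2*x2^2 + (-1)*a2*c1^2*d1*d2*x1 + (2)*a2*c1^2*d1^2*x2 + a2*c1^3*d2*x1 + (-1)*a2*c1^3*d1*x2 + a2*b2*d1*d2*x1*x2 + (-1)*a2*b2*d1*d2^2*x1 + a2*b2*d1^2 + (-1)*a2*b2*d1^2*x2^2 + (-1)*a2*b2*d1^3*x1 + (-1)*a2*b2*c2*d1*x1*x2 + a2*b2*c2*d1*d2*x1 + (-1)*a2*b2*c1*d2*x1*x2 + (-2)*a2*b2*c1*d1 + (2)*a2*b2*c1*d1*x2^2 + a2*b2*c1*d1*d2^2 + a2*b2*c1*d1^2*x1 + a2*b2*c1*d1^3 + a2*b2*c1*c2*x1*x2 + a2*b2*c1*c2*d2*x1 + (-2)*a2*b2*c1*c2*d1*d2 + (-1)*a2*b2*c1*c2^2*x1 + a2*b2*c1*c2^2*d1 + a2*b2*c1^2 + (-1)*a2*b2*c1^2*x2^2 + a2*b2*c1^2*d1*x1 + (-2)*a2*b2*c1^2*d1^2 + (-1)*a2*b2*c1^3*x1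 + a2*b2*c1^3*d1 + (-1)*a2*b1*d2^2*x1*x2 + (-1)*a2*b1*d1*d2 + a2*b1*d1*d2*x2^2 + a2*b1*d1*d2^2*x2 + a2*b1*d1^3*x2 + (2)*a2*b1*c2*d2*x1*x2 + a2*b1*c2*d1 + (-1)*a2*b1*c2*d1*x2^2 + (-1)*a2*b1*c2*d1*d2*x2 + (-1)*a2*b1*c2*d1*d2^2 + (-1)*a2*b1*c2*d1^3 + (-1)*a2*b1*c2^2*x1*x2 + a2*b1*c2^2*d1*d2 + a2*b1*c1*d2 + (-1)*a2*b1*c1*d2*x2^2 + (-1)*a2*b1*c1*d1^2*x2 + (-1)*a2*b1*c1*c2 + a2*b1*c1*c2*x2^2 + (-1)*a2*b1*c1*c2*d2*x2 + a2*b1*c1*c2*d2^2 + a2*b1*c1*c2*d1^2 + a2*b1*c1*c2^2*x2 + (-1)*a2*b1*c1*c2^2*d2 + (-1)*a2*b1*c1^2*d1*x2 + a2*b1*c1^2*d1*d2 + a2*b1*c1^3*x2 + (-1)*a2*b1*c1^3*d2 + a2*b1*b2*d2^2*x1 + (-1)*a2*b1*b2*d1*d2*x2 + (-2)*a2*b1*b2*c2*d2*x1 + a2*b1*b2*c2*d1*x2 + a2*b1*b2*c2*d1*d2 + a2*b1*b2*c2^2*x1 + (-1)*a2*b1*b2*c2^2*d1 + a2*b1*b2*c1*d2*x2 + (-1)*a2*b1*b2*c1*d2^2 + (-1)*a2*b1*b2*c1*c2*x2 + a2*b1*b2*c1*c2*d2 + a2*b1^2*d1*d2*x1 + (-1)*a2*b1^2*d1^2*x2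 + (-1)*a2*b1^2*c2*d1*x1 + a2*b1^2*c2*d1^2 + (-1)*a2*b1^2*c1*d2*x1 + (2)*a2*b1^2*c1*d1*x2 + (-1)*a2*b1^2*c1*d1*d2 + a2*b1^2*c1*c2*x1 + (-1)*a2*b1^2*c1*c2*d1 + (-1)*a2*b1^2*c1^2*x2 + a2*b1^2*c1^2*d2 + (-1)*a1*c2*d2^3*x1 + a1*c2*d1*d2*x2^2 + a1*c2*d1^2*x1*x2 + (-1)*a1*c2*d1^2*d2*x1 + (2)*a1*c2^2*d2^2*x1 + (-1)*a1*c2^2*d1*x2^2 + (-1)*a1*c2^2*d1*d2*x2 + (-1)*a1*c2^3*d2*x1 + a1*c2^3*d1*x2 + (-1)*a1*c1*d2^2*x2^2 + a1*c1*d2^3*x2 + (-1)*a1*c1*d1*d2*x1*x2 + a1*c1*d1^2*d2*x2 + a1*c1*c2*d2*x2^2 + (-1)*a1*c1*c2*d2^2*x2 + (-1)*a1*c1*c2*d1*x1*x2 + (2)*a1*c1*c2*d1*d2*x1 + (-1)*a1*c1*c2*d1^2*x2 + a1*c1^2*d2*x1*x2 + (-1)*a1*c1^2*d1*d2*x2 + (-1)*a1*c1^2*c2*d2*x1 + a1*c1^2*c2*d1*x2 + a1*b2*d2^3*x1 + (-1)*a1*b2*d1*d2*x2^2 + (-1)*a1*b2*d1^2*x1*x2 + a1*b2*d1^2*d2*x1 + (-1)*a1*b2*c2*d2^2*x1 + a1*b2*c2*d1*x2^2 + (-1)*a1*b2*c2^2*d2*x1 + a1*b2*c2^2*d1*d2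 + a1*b2*c2^3*x1 + (-1)*a1*b2*c2^3*d1 + a1*b2*c1*d2*x2^2 + (-1)*a1*b2*c1*d2^3 + (2)*a1*b2*c1*d1*x1*x2 + (-1)*a1*b2*c1*d1*d2*x1 + (-1)*a1*b2*c1*d1^2*d2 + (-1)*a1*b2*c1*c2*x2^2 + a1*b2*c1*c2*d2^2 + (-1)*a1*b2*c1*c2*d1*x1 + a1*b2*c1*c2*d1^2 + (-1)*a1*b2*c1^2*x1*x2 + a1*b2*c1^2*d1*d2 + a1*b2*c1^2*c2*x1 + (-1)*a1*b2*c1^2*c2*d1 + (-1)*a1*b2^2*d2^2*x1 + a1*b2^2*d1*d2*x2 + (2)*a1*b2^2*c2*d2*x1 + (-1)*a1*b2^2*c2*d1*x2 + (-1)*a1*b2^2*c2*d1*d2 + (-1)*a1*b2^2*c2^2*x1 + a1*b2^2*c2^2*d1 + (-1)*a1*b2^2*c1*d2*x2 + a1*b2^2*c1*d2^2 + a1*b2^2*c1*c2*x2 + (-1)*a1*b2^2*c1*c2*d2 + a1*b1*d2^2*x2^2 + (-1)*a1*b1*d2^3*x2 + a1*b1*d1*d2*x1*x2 + (-1)*a1*b1*d1^2*d2*x2 + (-2)*a1*b1*c2*d2*x2^2 + a1*b1*c2*d2^2*x2 + a1*b1*c2*d2^3 + (-1)*a1*b1*c2*d1*x1*x2 + a1*b1*c2*d1^2*d2 + a1*b1*c2^2*x2^2 + a1*b1*c2^2*d2*x2 + (-2)*a1*b1*c2^2*d2^2 + (-1)*a1*b1*c2^3*x2 + a1*b1*c2^3*d2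 + (-1)*a1*b1*c1*d2*x1*x2 + a1*b1*c1*d1*d2*x2 + a1*b1*c1*c2*x1*x2 + a1*b1*c1*c2*d1*x2 + (-2)*a1*b1*c1*c2*d1*d2 + (-1)*a1*b1*c1^2*c2*x2 + a1*b1*c1^2*c2*d2 + (-1)*a1*b1*b2*d1*d2*x1 + a1*b1*b2*d1^2*x2 + a1*b1*b2*c2*d1*x1 + (-1)*a1*b1*b2*c2*d1^2 + a1*b1*b2*c1*d2*x1 + (-2)*a1*b1*b2*c1*d1*x2 + a1*b1*b2*c1*d1*d2 + (-1)*a1*b1*b2*c1*c2*x1 + a1*b1*b2*c1*c2*d1 + a1*b1*b2*c1^2*x2 + (-1)*a1*b1*b2*c1^2*d2)*(a1^2+a2^2-1) + ((-2)*d1*d2*x1*x2 + (2)*d1*d2^2*x1 + (-2)*d1^2 + (2)*d1^2*x2^2 + (2)*d1^3*x1 + (2)*c2*d1*x1*x2 + (-2)*c2*d1*d2*x1 + c2^2*d1*d2*x1*x2 + (-1)*c2^2*d1*d2^2*x1 + c2^2*d1^2 + (-1)*c2^2*d1^2*x2^2 + (-1)*c2^2*d1^3*x1 + (-1)*c2^3*d1*x1*x2 + c2^3*d1*d2*x1 + (2)*c1*d2*x1*x2 + (-1)*c1*d2^3*x1*x2 + (4)*c1*d1 + (-4)*c1*d1*x2^2 + (-2)*c1*d1*d2^2 + c1*d1*d2^2*x2^2 + (-2)*c1*d1^2*x1 + (-1)*c1*d1^2*d2*x1*x2 + (-2)*c1*d1^3 + c1*d1^3*x2^2 + (-2)*c1*c2*x1*x2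 + (-2)*c1*c2*d2*x1 + c1*c2*d2^2*x1*x2 + c1*c2*d2^3*x1 + (2)*c1*c2*d1*d2 + c1*c2*d1^2*x1*x2 + c1*c2*d1^2*d2*x1 + (2)*c1*c2^2*x1 + (-1)*c1*c2^2*d2^2*x1 + (-2)*c1*c2^2*d1 + c1*c2^2*d1*x2^2 + (-2)*c1^2 + (2)*c1^2*x2^2 + c1^2*d2^2 + (-1)*c1^2*d2^2*x2^2 + (-2)*c1^2*d1*x1 + c1^2*d1*d2*x1*x2 + (4)*c1^2*d1^2 + (-2)*c1^2*d1^2*x2^2 + (-1)*c1^2*c2*d1*x1*x2 + c1^2*c2*d1*d2*x1 + (2)*c1^3*x1 + (-1)*c1^3*d2^2*x1 + (-2)*c1^3*d1 + c1^3*d1*x2^2 + (-1)*b2*c2*d1*d2*x1*x2 + b2*c2*d1*d2^2*x1 + (-1)*b2*c2*d1^2 + b2*c2*d1^2*x2^2 + b2*c2*d1^3*x1 + b2*c2^2*d1*x1*x2 + (-1)*b2*c2^2*d1*d2*x1 + b2*c1*d2^2*x1*x2 + b2*c1*d1*d2 + (-1)*b2*c1*d1*d2*x2^2 + (-1)*b2*c1*d1*d2^2*x2 + (-1)*b2*c1*d1^3*x2 + (-1)*b2*c1*c2*d2*x1*x2 + (-1)*b2*c1*c2*d2^2*x1 + b2*c1*c2*d1 + (-1)*b2*c1*c2*d1*x2^2 + (2)*b2*c1*c2*d1*d2*x2 + (-1)*b2*c1*c2*d1^2*x1 + b2*c1*c2^2*d2*x1 + (-1)*b2*c1*c2^2*d1*x2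 + (-1)*b2*c1^2*d2 + b2*c1^2*d2*x2^2 + (-1)*b2*c1^2*d1*d2*x1 + (2)*b2*c1^2*d1^2*x2 + b2*c1^3*d2*x1 + (-1)*b2*c1^3*d1*x2 + (-1)*b1*d2^2*x1 + b1*d1*d2*x2 + (2)*b1*c2*d2*x1 + (-1)*b1*c2*d2^3*x1 + (-1)*b1*c2*d1*x2 + (-1)*b1*c2*d1*d2 + b1*c2*d1*d2*x2^2 + b1*c2*d1^2*x1*x2 + (-1)*b1*c2*d1^2*d2*x1 + (-1)*b1*c2^2*x1 + (2)*b1*c2^2*d2^2*x1 + b1*c2^2*d1 + (-1)*b1*c2^2*d1*x2^2 + (-1)*b1*c2^2*d1*d2*x2 + (-1)*b1*c2^3*d2*x1 + b1*c2^3*d1*x2 + (-1)*b1*c1*d2*x2 + b1*c1*d2^2 + (-1)*b1*c1*d2^2*x2^2 + b1*c1*d2^3*x2 + (-1)*b1*c1*d1*d2*x1*x2 + b1*c1*d1^2*d2*x2 + b1*c1*c2*x2 + (-1)*b1*c1*c2*d2 + b1*c1*c2*d2*x2^2 + (-1)*b1*c1*c2*d2^2*x2 + (-1)*b1*c1*c2*d1*x1*x2 + (2)*b1*c1*c2*d1*d2*x1 + (-1)*b1*c1*c2*d1^2*x2 + b1*c1^2*d2*x1*x2 + (-1)*b1*c1^2*d1*d2*x2 + (-1)*b1*c1^2*c2*d2*x1 + b1*c1^2*c2*d1*x2 + a2*c2*d1*d2*x1*x2 + (-1)*a2*c2*d1*d2^2*x1 + a2*c2*d1^2 + (-1)*a2*c2*d1^2*x2^2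 + (-1)*a2*c2*d1^3*x1 + (-1)*a2*c2^2*d1*x1*x2 + a2*c2^2*d1*d2*x1 + (-1)*a2*c1*d2^2*x1*x2 + (-1)*a2*c1*d1*d2 + a2*c1*d1*d2*x2^2 + a2*c1*d1*d2^2*x2 + a2*c1*d1^3*x2 + a2*c1*c2*d2*x1*x2 + a2*c1*c2*d2^2*x1 + (-1)*a2*c1*c2*d1 + a2*c1*c2*d1*x2^2 + (-2)*a2*c1*c2*d1*d2*x2 + a2*c1*c2*d1^2*x1 + (-1)*a2*c1*c2^2*d2*x1 + a2*c1*c2^2*d1*x2 + a2*c1^2*d2 + (-1)*a2*c1^2*d2*x2^2 + a2*c1^2*d1*d2*x1 + (-2)*a2*c1^2*d1^2*x2 + (-1)*a2*c1^3*d2*x1 + a2*c1^3*d1*x2 + a2*b2*d1*d2*x1*x2 + (-1)*a2*b2*d1*d2^2*x1 + a2*b2*d1^2 + (-1)*a2*b2*d1^2*x2^2 + (-1)*a2*b2*d1^3*x1 + (-1)*a2*b2*c2*d1*x1*x2 + a2*b2*c2*d1*d2*x1 + (-1)*a2*b2*c1*d2*x1*x2 + (-2)*a2*b2*c1*d1 + (2)*a2*b2*c1*d1*x2^2 + a2*b2*c1*d1*d2^2 + a2*b2*c1*d1^2*x1 + a2*b2*c1*d1^3 + a2*b2*c1*c2*x1*x2 + a2*b2*c1*c2*d2*x1 + (-2)*a2*b2*c1*c2*d1*d2 + (-1)*a2*b2*c1*c2^2*x1 + a2*b2*c1*c2^2*d1 + a2*b2*c1^2 + (-1)*a2*b2*c1^2*x2^2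 + a2*b2*c1^2*d1*x1 + (-2)*a2*b2*c1^2*d1^2 + (-1)*a2*b2*c1^3*x1 + a2*b2*c1^3*d1 + a2*b1*d2^3*x1 + (-1)*a2*b1*d1*d2*x2^2 + (-1)*a2*b1*d1^2*x1*x2 + a2*b1*d1^2*d2*x1 + (-1)*a2*b1*c2*d2^2*x1 + a2*b1*c2*d1*x2^2 + (-1)*a2*b1*c2^2*d2*x1 + a2*b1*c2^2*d1*d2 + a2*b1*c2^3*x1 + (-1)*a2*b1*c2^3*d1 + a2*b1*c1*d2*x2^2 + (-1)*a2*b1*c1*d2^3 + (2)*a2*b1*c1*d1*x1*x2 + (-1)*a2*b1*c1*d1*d2*x1 + (-1)*a2*b1*c1*d1^2*d2 + (-1)*a2*b1*c1*c2*x2^2 + a2*b1*c1*c2*d2^2 + (-1)*a2*b1*c1*c2*d1*x1 + a2*b1*c1*c2*d1^2 + (-1)*a2*b1*c1^2*x1*x2 + a2*b1*c1^2*d1*d2 + a2*b1*c1^2*c2*x1 + (-1)*a2*b1*c1^2*c2*d1 + (-1)*a1*d2^2*x1 + a1*d2^3*x1*x2 + a1*d1*d2*x2 + (-1)*a1*d1*d2^2*x2^2 + a1*d1^2*d2*x1*x2 + (-1)*a1*d1^3*x2^2 + (2)*a1*c2*d2*x1 + (-1)*a1*c2*d2^2*x1*x2 + (-1)*a1*c2*d1*x2 + a1*c2*d1*d2 + (-1)*a1*c2*d1*d2*x2^2 + (-2)*a1*c2*d1^2*x1*x2 + (-1)*a1*c2^2*x1 + (-1)*a1*c2^2*d2*x1*x2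 + (-1)*a1*c2^2*d1 + (2)*a1*c2^2*d1*x2^2 + a1*c2^2*d1*d2^2 + a1*c2^2*d1^2*x1 + a1*c2^2*d1^3 + a1*c2^3*x1*x2 + (-1)*a1*c2^3*d1*d2 + (-1)*a1*c1*d2*x2 + (-1)*a1*c1*d2^2 + (2)*a1*c1*d2^2*x2^2 + a1*c1*d1*d2*x1*x2 + a1*c1*d1^2*x2^2 + a1*c1*c2*x2 + a1*c1*c2*d2 + (-1)*a1*c1*c2*d2*x2^2 + (-1)*a1*c1*c2*d2^3 + a1*c1*c2*d1*x1*x2 + (-2)*a1*c1*c2*d1*d2*x1 + (-1)*a1*c1*c2*d1^2*d2 + (-1)*a1*c1*c2^2*x2^2 + a1*c1*c2^2*d2^2 + (-2)*a1*c1^2*d2*x1*x2 + a1*c1^2*d2^2*x1 + a1*c1^2*d1*x2^2 + a1*c1^2*c2*x1*x2 + (-1)*a1*c1^2*c2*d1*d2 + (-1)*a1*c1^3*x2^2 + a1*c1^3*d2^2 + (-1)*a1*b2*d2^2*x1*x2 + (-1)*a1*b2*d1*d2 + a1*b2*d1*d2*x2^2 + a1*b2*d1*d2^2*x2 + a1*b2*d1^3*x2 + (2)*a1*b2*c2*d2*x1*x2 + a1*b2*c2*d1 + (-1)*a1*b2*c2*d1*x2^2 + (-1)*a1*b2*c2*d1*d2*x2 + (-1)*a1*b2*c2*d1*d2^2 + (-1)*a1*b2*c2*d1^3 + (-1)*a1*b2*c2^2*x1*x2 + a1*b2*c2^2*d1*d2 + a1*b2*c1*d2 + (-1)*a1*b2*c1*d2*x2^2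 + (-1)*a1*b2*c1*d1^2*x2 + (-1)*a1*b2*c1*c2 + a1*b2*c1*c2*x2^2 + (-1)*a1*b2*c1*c2*d2*x2 + a1*b2*c1*c2*d2^2 + a1*b2*c1*c2*d1^2 + a1*b2*c1*c2^2*x2 + (-1)*a1*b2*c1*c2^2*d2 + (-1)*a1*b2*c1^2*d1*x2 + a1*b2*c1^2*d1*d2 + a1*b2*c1^3*x2 + (-1)*a1*b2*c1^3*d2 + a1*b1*d2^2*x2^2 + (-1)*a1*b1*d2^3*x2 + a1*b1*d1*d2*x1*x2 + (-1)*a1*b1*d1^2*d2*x2 + (-2)*a1*b1*c2*d2*x2^2 + a1*b1*c2*d2^2*x2 + a1*b1*c2*d2^3 + (-1)*a1*b1*c2*d1*x1*x2 + a1*b1*c2*d1^2*d2 + a1*b1*c2^2*x2^2 + a1*b1*c2^2*d2*x2 + (-2)*a1*b1*c2^2*d2^2 + (-1)*a1*b1*c2^3*x2 + a1*b1*c2^3*d2 + (-1)*a1*b1*c1*d2*x1*x2 + a1*b1*c1*d1*d2*x2 + a1*b1*c1*c2*x1*x2 + a1*b1*c1*c2*d1*x2 + (-2)*a1*b1*c1*c2*d1*d2 + (-1)*a1*b1*c1^2*c2*x2 + a1*b1*c1^2*c2*d2 + a1*a2*d2^2*x1*x2 + (-1)*a1*a2*d2^3*x1 + a1*a2*d1*d2 + (-1)*a1*a2*d1*d2^2*x2 + a1*a2*d1^2*x1*x2 + (-1)*a1*a2*d1^2*d2*x1 + (-1)*a1*a2*d1^3*x2 + (-2)*a1*a2*c2*d2*x1*x2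 + a1*a2*c2*d2^2*x1 + (-1)*a1*a2*c2*d1 + a1*a2*c2*d1*d2*x2 + a1*a2*c2*d1*d2^2 + a1*a2*c2*d1^3 + a1*a2*c2^2*x1*x2 + a1*a2*c2^2*d2*x1 + (-2)*a1*a2*c2^2*d1*d2 + (-1)*a1*a2*c2^3*x1 + a1*a2*c2^3*d1 + (-1)*a1*a2*c1*d2 + a1*a2*c1*d2^3 + (-2)*a1*a2*c1*d1*x1*x2 + a1*a2*c1*d1*d2*x1 + a1*a2*c1*d1^2*x2 + a1*a2*c1*d1^2*d2 + a1*a2*c1*c2 + a1*a2*c1*c2*d2*x2 + (-2)*a1*a2*c1*c2*d2^2 + a1*a2*c1*c2*d1*x1 + (-2)*a1*a2*c1*c2*d1^2 + (-1)*a1*a2*c1*c2^2*x2 + a1*a2*c1*c2^2*d2 + a1*a2*c1^2*x1*x2 + a1*a2*c1^2*d1*x2 + (-2)*a1*a2*c1^2*d1*d2 + (-1)*a1*a2*c1^2*c2*x1 + a1*a2*c1^2*c2*d1 + (-1)*a1*a2*c1^3*x2 + a1*a2*c1^3*d2 + a1*a2*b2*d2^2*x1 + (-1)*a1*a2*b2*d1*d2*x2 + (-2)*a1*a2*b2*c2*d2*x1 + a1*a2*b2*c2*d1*x2 + a1*a2*b2*c2*d1*d2 + a1*a2*b2*c2^2*x1 + (-1)*a1*a2*b2*c2^2*d1 + a1*a2*b2*c1*d2*x2 + (-1)*a1*a2*b2*c1*d2^2 + (-1)*a1*a2*b2*c1*c2*x2 + a1*a2*b2*c1*c2*d2 + (-1)*a1*a2*b1*d1*d2*x1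 + a1*a2*b1*d1^2*x2 + a1*a2*b1*c2*d1*x1 + (-1)*a1*a2*b1*c2*d1^2 + a1*a2*b1*c1*d2*x1 + (-2)*a1*a2*b1*c1*d1*x2 + a1*a2*b1*c1*d1*d2 + (-1)*a1*a2*b1*c1*c2*x1 + a1*a2*b1*c1*c2*d1 + a1*a2*b1*c1^2*x2 + (-1)*a1*a2*b1*c1^2*d2 + a1^2*d2^2 + (-1)*a1^2*d2^2*x2^2 + (-2)*a1^2*d1*d2^2*x1 + (2)*a1^2*d1^2 + (-1)*a1^2*d1^2*x2^2 + (-2)*a1^2*d1^3*x1 + (-2)*a1^2*c2*d2 + (2)*a1^2*c2*d2*x2^2 + a1^2*c2*d1*d2*x1 + a1^2*c2*d1^2*x2 + a1^2*c2^2 + (-1)*a1^2*c2^2*x2^2 + a1^2*c2^2*d1*x1 + (-2)*a1^2*c2^2*d1^2 + a1^2*c1*d2^2*x1 + (-4)*a1^2*c1*d1 + (2)*a1^2*c1*d1*x2^2 + (-1)*a1^2*c1*d1*d2*x2 + (2)*a1^2*c1*d1*d2^2 + (2)*a1^2*c1*d1^2*x1 + (2)*a1^2*c1*d1^3 + a1^2*c1*c2*d2*x1 + (-1)*a1^2*c1*c2*d1*x2 + (-2)*a1^2*c1*c2^2*x1 + (2)*a1^2*c1*c2^2*d1 + (2)*a1^2*c1^2 + (-1)*a1^2*c1^2*x2^2 + a1^2*c1^2*d2*x2 + (-2)*a1^2*c1^2*d2^2 + (2)*a1^2*c1^2*d1*x1 + (-4)*a1^2*c1^2*d1^2 + (-2)*a1^2*c1^3*x1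 + (2)*a1^2*c1^3*d1 + a1^2*b2*d1*d2*x1 + (-1)*a1^2*b2*d1^2*x2 + (-1)*a1^2*b2*c2*d1*x1 + a1^2*b2*c2*d1^2 + (-1)*a1^2*b2*c1*d2*x1 + (2)*a1^2*b2*c1*d1*x2 + (-1)*a1^2*b2*c1*d1*d2 + a1^2*b2*c1*c2*x1 + (-1)*a1^2*b2*c1*c2*d1 + (-1)*a1^2*b2*c1^2*x2 + a1^2*b2*c1^2*d2 + a1^2*b1*d2^2*x1 + (-1)*a1^2*b1*d1*d2*x2 + (-2)*a1^2*b1*c2*d2*x1 + a1^2*b1*c2*d1*x2 + a1^2*b1*c2*d1*d2 + a1^2*b1*c2^2*x1 + (-1)*a1^2*b1*c2^2*d1 + a1^2*b1*c1*d2*x2 + (-1)*a1^2*b1*c1*d2^2 + (-1)*a1^2*b1*c1*c2*x2 + a1^2*b1*c1*c2*d2)*(b1^2+b2^2-1) + ((2)*d1*d2*x1*x2 + (-2)*d1*d2^2*x1 + (2)*d1^2 + (-2)*d1^2*x2^2 + (-2)*d1^3*x1 + (-2)*c2*d1*x1*x2 + (2)*c2*d1*d2*x1 + (2)*c1*x1 + (-2)*c1*d2^2*x1 + (-2)*c1*d1 + (2)*c1*d1*x2^2 + (-1)*b1*x1 + (-1)*b1*d2*x1*x2 + (2)*b1*d2^2*x1 + (-1)*b1*d1 + b1*d1*x2^2 + (-1)*b1*d1*d2*x2 + b1*d1*d2^2 + b1*d1^2*x1 + b1*d1^3 + b1*c2*x1*x2 + (-1)*b1*c2*d2*x1 + b1*c2*d1*x2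 + (-1)*b1*c2*d1*d2 + (-1)*b1*c1*x2^2 + b1*c1*d2^2 + b1*b2*x1*x2 + b1*b2*d2*x1 + (-2)*b1*b2*d2^2*x1*x2 + (-1)*b1*b2*d1*d2 + b1*b2*d1*d2^2*x2 + (-2)*b1*b2*d1^2*x1*x2 + b1*b2*d1^3*x2 + (-1)*b1*b2*c2*x1 + b1*b2*c2*d2*x1*x2 + b1*b2*c2*d1*x2^2 + (-1)*b1*b2*c2*d1*d2*x2 + b1*b2*c2*d1^2*x1 + (-1)*b1*b2*c1*x2 + b1*b2*c1*d2 + (-1)*b1*b2*c1*d2*x2^2 + b1*b2*c1*d2^2*x2 + b1*b2*c1*d1*x1*x2 + (-1)*b1*b2*c1*d1*d2*x1 + b1^2 + (-1)*b1^2*x2^2 + (-2)*b1^2*d2^2 + (2)*b1^2*d2^2*x2^2 + b1^2*d1*x1 + b1^2*d1*d2^2*x1 + (-3)*b1^2*d1^2 + (2)*b1^2*d1^2*x2^2 + b1^2*d1^3*x1 + b1^2*c2*d2 + (-1)*b1^2*c2*d2*x2^2 + b1^2*c2*d1*x1*x2 + (-1)*b1^2*c2*d1*d2*x1 + (-1)*b1^2*c2*d1^2*x2 + (-2)*b1^2*c1*x1 + (-1)*b1^2*c1*d2*x1*x2 + b1^2*c1*d2^2*x1 + (2)*b1^2*c1*d1 + (-1)*b1^2*c1*d1*x2^2 + b1^2*c1*d1*d2*x2 + (-2)*a2*b2*d1*d2*x1*x2 + (2)*a2*b2*d1*d2^2*x1 + (-2)*a2*b2*d1^2 + (2)*a2*b2*d1^2*x2^2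 + (2)*a2*b2*d1^3*x1 + (2)*a2*b2*c2*d1*x1*x2 + (-2)*a2*b2*c2*d1*d2*x1 + (-2)*a2*b2*c1*x1 + (2)*a2*b2*c1*d2^2*x1 + (2)*a2*b2*c1*d1 + (-2)*a2*b2*c1*d1*x2^2 + (-1)*a2*b1*x1*x2 + (-1)*a2*b1*d2*x1 + (2)*a2*b1*d2^2*x1*x2 + a2*b1*d1*d2 + (-1)*a2*b1*d1*d2^2*x2 + (2)*a2*b1*d1^2*x1*x2 + (-1)*a2*b1*d1^3*x2 + a2*b1*c2*x1 + (-1)*a2*b1*c2*d2*x1*x2 + (-1)*a2*b1*c2*d1*x2^2 + a2*b1*c2*d1*d2*x2 + (-1)*a2*b1*c2*d1^2*x1 + a2*b1*c1*x2 + (-1)*a2*b1*c1*d2 + a2*b1*c1*d2*x2^2 + (-1)*a2*b1*c1*d2^2*x2 + (-1)*a2*b1*c1*d1*x1*x2 + a2*b1*c1*d1*d2*x1 + a2*b1*b2*x1 + a2*b1*b2*d2*x1*x2 + (-2)*a2*b1*b2*d2^2*x1 + a2*b1*b2*d1 + (-1)*a2*b1*b2*d1*x2^2 + a2*b1*b2*d1*d2*x2 + (-1)*a2*b1*b2*d1*d2^2 + (-1)*a2*b1*b2*d1^2*x1 + (-1)*a2*b1*b2*d1^3 + (-1)*a2*b1*b2*c2*x1*x2 + a2*b1*b2*c2*d2*x1 + (-1)*a2*b1*b2*c2*d1*x2 + a2*b1*b2*c2*d1*d2 + a2*b1*b2*c1*x2^2 + (-1)*a2*b1*b2*c1*d2^2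 + a2*b1^2*d2 + (-1)*a2*b1^2*d2*x2^2 + (-1)*a2*b1^2*d1*x1*x2 + (-1)*a2*b1^2*d1*d2*x1 + a2*b1^2*d1^2*x2 + (-1)*a2*b1^2*c2 + a2*b1^2*c2*x2^2 + a2*b1^2*c2*d1^2 + a2*b1^2*c1*x1*x2 + a2*b1^2*c1*d2*x1 + (-1)*a2*b1^2*c1*d1*x2 + (-1)*a2*b1^2*c1*d1*d2 + (-1)*a1*x1 + (-1)*a1*d2*x1*x2 + (2)*a1*d2^2*x1 + (-1)*a1*d1 + a1*d1*x2^2 + (-1)*a1*d1*d2*x2 + a1*d1*d2^2 + a1*d1^2*x1 + a1*d1^3 + a1*c2*x1*x2 + (-1)*a1*c2*d2*x1 + a1*c2*d1*x2 + (-1)*a1*c2*d1*d2 + (-1)*a1*c1*x2^2 + a1*c1*d2^2 + (-1)*a1*b2*x1*x2 + (-1)*a1*b2*d2*x1 + (2)*a1*b2*d2^2*x1*x2 + a1*b2*d1*d2 + (-1)*a1*b2*d1*d2^2*x2 + (2)*a1*b2*d1^2*x1*x2 + (-1)*a1*b2*d1^3*x2 + a1*b2*c2*x1 + (-1)*a1*b2*c2*d2*x1*x2 + (-1)*a1*b2*c2*d1*x2^2 + a1*b2*c2*d1*d2*x2 + (-1)*a1*b2*c2*d1^2*x1 + a1*b2*c1*x2 + (-1)*a1*b2*c1*d2 + a1*b2*c1*d2*x2^2 + (-1)*a1*b2*c1*d2^2*x2 + (-1)*a1*b2*c1*d1*x1*x2 + a1*b2*c1*d1*d2*x1 + (2)*a1*b1*x2^2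 + (2)*a1*b1*d2*x2 + (-4)*a1*b1*d2^2*x2^2 + (-2)*a1*b1*d1*d2*x1*x2 + (-2)*a1*b1*d1^2*x2^2 + (-2)*a1*b1*c2*x2 + (2)*a1*b1*c2*d2*x2^2 + (2)*a1*b1*c2*d1^2*x2 + (2)*a1*b1*c1*d2*x1*x2 + (-2)*a1*b1*c1*d1*d2*x2 + (-1)*a1*b1*b2*d2 + a1*b1*b2*d2*x2^2 + a1*b1*b2*d1*x1*x2 + a1*b1*b2*d1*d2*x1 + (-1)*a1*b1*b2*d1^2*x2 + a1*b1*b2*c2 + (-1)*a1*b1*b2*c2*x2^2 + (-1)*a1*b1*b2*c2*d1^2 + (-1)*a1*b1*b2*c1*x1*x2 + (-1)*a1*b1*b2*c1*d2*x1 + a1*b1*b2*c1*d1*x2 + a1*b1*b2*c1*d1*d2 + a1*b1^2*x1 + a1*b1^2*d2*x1*x2 + (-2)*a1*b1^2*d2^2*x1 + a1*b1^2*d1 + (-1)*a1*b1^2*d1*x2^2 + a1*b1^2*d1*d2*x2 + (-1)*a1*b1^2*d1*d2^2 + (-1)*a1*b1^2*d1^2*x1 + (-1)*a1*b1^2*d1^3 + (-1)*a1*b1^2*c2*x1*x2 + a1*b1^2*c2*d2*x1 + (-1)*a1*b1^2*c2*d1*x2 + a1*b1^2*c2*d1*d2 + a1*b1^2*c1*x2^2 + (-1)*a1*b1^2*c1*d2^2 + a1*a2*x1*x2 + a1*a2*d2*x1 + (-2)*a1*a2*d2^2*x1*x2 + (-1)*a1*a2*d1*d2 + a1*a2*d1*d2^2*x2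 + (-2)*a1*a2*d1^2*x1*x2 + a1*a2*d1^3*x2 + (-1)*a1*a2*c2*x1 + a1*a2*c2*d2*x1*x2 + a1*a2*c2*d1*x2^2 + (-1)*a1*a2*c2*d1*d2*x2 + a1*a2*c2*d1^2*x1 + (-1)*a1*a2*c1*x2 + a1*a2*c1*d2 + (-1)*a1*a2*c1*d2*x2^2 + a1*a2*c1*d2^2*x2 + a1*a2*c1*d1*x1*x2 + (-1)*a1*a2*c1*d1*d2*x1 + a1*a2*b2*x1 + a1*a2*b2*d2*x1*x2 + (-2)*a1*a2*b2*d2^2*x1 + a1*a2*b2*d1 + (-1)*a1*a2*b2*d1*x2^2 + a1*a2*b2*d1*d2*x2 + (-1)*a1*a2*b2*d1*d2^2 + (-1)*a1*a2*b2*d1^2*x1 + (-1)*a1*a2*b2*d1^3 + (-1)*a1*a2*b2*c2*x1*x2 + a1*a2*b2*c2*d2*x1 + (-1)*a1*a2*b2*c2*d1*x2 + a1*a2*b2*c2*d1*d2 + a1*a2*b2*c1*x2^2 + (-1)*a1*a2*b2*c1*d2^2 + (-1)*a1*a2*b1*d2 + a1*a2*b1*d2*x2^2 + a1*a2*b1*d1*x1*x2 + a1*a2*b1*d1*d2*x1 + (-1)*a1*a2*b1*d1^2*x2 + a1*a2*b1*c2 + (-1)*a1*a2*b1*c2*x2^2 + (-1)*a1*a2*b1*c2*d1^2 + (-1)*a1*a2*b1*c1*x1*x2 + (-1)*a1*a2*b1*c1*d2*x1 + a1*a2*b1*c1*d1*x2 + a1*a2*b1*c1*d1*d2 + (-2)*a1*a2*b1*b2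 + (-2)*a1*a2*b1*b2*d2*x2 + (4)*a1*a2*b1*b2*d2^2 + (-2)*a1*a2*b1*b2*d1*x1 + (4)*a1*a2*b1*b2*d1^2 + (2)*a1*a2*b1*b2*c2*x2 + (-2)*a1*a2*b1*b2*c2*d2 + (2)*a1*a2*b1*b2*c1*x1 + (-2)*a1*a2*b1*b2*c1*d1 + a1^2 + (-1)*a1^2*x2^2 + (-2)*a1^2*d2^2 + (2)*a1^2*d2^2*x2^2 + a1^2*d1*x1 + a1^2*d1*d2^2*x1 + (-3)*a1^2*d1^2 + (2)*a1^2*d1^2*x2^2 + a1^2*d1^3*x1 + a1^2*c2*d2 + (-1)*a1^2*c2*d2*x2^2 + a1^2*c2*d1*x1*x2 + (-1)*a1^2*c2*d1*d2*x1 + (-1)*a1^2*c2*d1^2*x2 + (-2)*a1^2*c1*x1 + (-1)*a1^2*c1*d2*x1*x2 + a1^2*c1*d2^2*x1 + (2)*a1^2*c1*d1 + (-1)*a1^2*c1*d1*x2^2 + a1^2*c1*d1*d2*x2 + a1^2*b2*d2 + (-1)*a1^2*b2*d2*x2^2 + (-1)*a1^2*b2*d1*x1*x2 + (-1)*a1^2*b2*d1*d2*x1 + a1^2*b2*d1^2*x2 + (-1)*a1^2*b2*c2 + a1^2*b2*c2*x2^2 + a1^2*b2*c2*d1^2 + a1^2*b2*c1*x1*x2 + a1^2*b2*c1*d2*x1 + (-1)*a1^2*b2*c1*d1*x2 + (-1)*a1^2*b2*c1*d1*d2 + a1^2*b1*x1 + a1^2*b1*d2*x1*x2 + (-2)*a1^2*b1*d2^2*x1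 + a1^2*b1*d1 + (-1)*a1^2*b1*d1*x2^2 + a1^2*b1*d1*d2*x2 + (-1)*a1^2*b1*d1*d2^2 + (-1)*a1^2*b1*d1^2*x1 + (-1)*a1^2*b1*d1^3 + (-1)*a1^2*b1*c2*x1*x2 + a1^2*b1*c2*d2*x1 + (-1)*a1^2*b1*c2*d1*x2 + a1^2*b1*c2*d1*d2 + a1^2*b1*c1*x2^2 + (-1)*a1^2*b1*c1*d2^2 + (-2)*a1^2*b1^2 + (-2)*a1^2*b1^2*d2*x2 + (4)*a1^2*b1^2*d2^2 + (-2)*a1^2*b1^2*d1*x1 + (4)*a1^2*b1^2*d1^2 + (2)*a1^2*b1^2*c2*x2 + (-2)*a1^2*b1^2*c2*d2 + (2)*a1^2*b1^2*c1*x1 + (-2)*a1^2*b1^2*c1*d1)*(c1^2+c2^2-1) + ((-2)*c1*x1 + (-2)*c1*d2*x1*x2 + (-2)*c1*d1 + (2)*c1*d1*x2^2 + (2)*c1*c2*x1*x2 + (2)*c1*c2*d2*x1 + (2)*c1^2 + (-2)*c1^2*x2^2 + (2)*c1^2*d1*x1 + b1*x1 + b1*d2*x1*x2 + b1*d1 + (-1)*b1*d1*x2^2 + (-1)*b1*c2*x1*x2 + (-1)*b1*c2*d2*x1 + b1*c1*x2^2 + b1*c1*d2*x2 + (-1)*b1*c1*c2*x2 + (-1)*b1*c1*c2*d2 + (-1)*b1*c1^2*x1 + (-1)*b1*c1^2*d1 + (-1)*b1*b2*x1*x2 + (-1)*b1*b2*d2*x1 + b1*b2*c2*x1 + b1*b2*c2*d2*x1*x2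 + b1*b2*c2*d1 + (-1)*b1*b2*c2*d1*x2^2 + b1*b2*c1*x2 + b1*b2*c1*d2*x2^2 + b1*b2*c1*d1*x1*x2 + (-1)*b1*b2*c1*c2 + (-1)*b1*b2*c1*c2*d2*x2 + (-1)*b1*b2*c1*c2*d1*x1 + b1*b2*c1^2*d2*x1 + (-1)*b1*b2*c1^2*d1*x2 + (-1)*b1^2 + b1^2*x2^2 + (-1)*b1^2*d1*x1 + b1^2*c2*d2 + (-1)*b1^2*c2*d2*x2^2 + (-1)*b1^2*c2*d1*x1*x2 + (2)*b1^2*c1*x1 + b1^2*c1*d2*x1*x2 + (2)*b1^2*c1*d1 + (-1)*b1^2*c1*d1*x2^2 + (-1)*b1^2*c1*c2*d2*x1 + b1^2*c1*c2*d1*x2 + (-1)*b1^2*c1^2 + (-1)*b1^2*c1^2*d2*x2 + (-1)*b1^2*c1^2*d1*x1 + (2)*a2*b2*c1*x1 + (2)*a2*b2*c1*d2*x1*x2 + (2)*a2*b2*c1*d1 + (-2)*a2*b2*c1*d1*x2^2 + (-2)*a2*b2*c1*c2*x1*x2 + (-2)*a2*b2*c1*c2*d2*x1 + (-2)*a2*b2*c1^2 + (2)*a2*b2*c1^2*x2^2 + (-2)*a2*b2*c1^2*d1*x1 + a2*b1*x1*x2 + a2*b1*d2*x1 + (-1)*a2*b1*c2*x1 + (-1)*a2*b1*c2*d2*x1*x2 + (-1)*a2*b1*c2*d1 + a2*b1*c2*d1*x2^2 + (-1)*a2*b1*c1*x2 + (-1)*a2*b1*c1*d2*x2^2 + (-1)*a2*b1*c1*d1*x1*x2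 + a2*b1*c1*c2 + a2*b1*c1*c2*d2*x2 + a2*b1*c1*c2*d1*x1 + (-1)*a2*b1*c1^2*d2*x1 + a2*b1*c1^2*d1*x2 + (-1)*a2*b1*b2*x1 + (-1)*a2*b1*b2*d2*x1*x2 + (-1)*a2*b1*b2*d1 + a2*b1*b2*d1*x2^2 + a2*b1*b2*c2*x1*x2 + a2*b1*b2*c2*d2*x1 + (-1)*a2*b1*b2*c1*x2^2 + (-1)*a2*b1*b2*c1*d2*x2 + a2*b1*b2*c1*c2*x2 + a2*b1*b2*c1*c2*d2 + a2*b1*b2*c1^2*x1 + a2*b1*b2*c1^2*d1 + (-1)*a2*b1^2*d2 + a2*b1^2*d2*x2^2 + a2*b1^2*d1*x1*x2 + a2*b1^2*c2 + (-1)*a2*b1^2*c2*x2^2 + a2*b1^2*c2*d1*x1 + (-1)*a2*b1^2*c1*x1*x2 + (-1)*a2*b1^2*c1*d1*x2 + (-1)*a2*b1^2*c1*c2*x1 + (-1)*a2*b1^2*c1*c2*d1 + a2*b1^2*c1^2*x2 + a2*b1^2*c1^2*d2 + a1*x1 + a1*d2*x1*x2 + a1*d1 + (-1)*a1*d1*x2^2 + (-1)*a1*c2*x1*x2 + (-1)*a1*c2*d2*x1 + a1*c1*x2^2 + a1*c1*d2*x2 + (-1)*a1*c1*c2*x2 + (-1)*a1*c1*c2*d2 + (-1)*a1*c1^2*x1 + (-1)*a1*c1^2*d1 + a1*b2*x1*x2 + a1*b2*d2*x1 + (-1)*a1*b2*c2*x1 + (-1)*a1*b2*c2*d2*x1*x2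 + (-1)*a1*b2*c2*d1 + a1*b2*c2*d1*x2^2 + (-1)*a1*b2*c1*x2 + (-1)*a1*b2*c1*d2*x2^2 + (-1)*a1*b2*c1*d1*x1*x2 + a1*b2*c1*c2 + a1*b2*c1*c2*d2*x2 + a1*b2*c1*c2*d1*x1 + (-1)*a1*b2*c1^2*d2*x1 + a1*b2*c1^2*d1*x2 + (-2)*a1*b1*x2^2 + (-2)*a1*b1*d2*x2 + (2)*a1*b1*c2*x2 + (2)*a1*b1*c2*d2*x2^2 + (2)*a1*b1*c2*d1*x1*x2 + (-2)*a1*b1*c1*c2*x1*x2 + (-2)*a1*b1*c1*c2*d1*x2 + (2)*a1*b1*c1^2*x2^2 + (2)*a1*b1*c1^2*d2*x2 + a1*b1*b2*d2 + (-1)*a1*b1*b2*d2*x2^2 + (-1)*a1*b1*b2*d1*x1*x2 + (-1)*a1*b1*b2*c2 + a1*b1*b2*c2*x2^2 + (-1)*a1*b1*b2*c2*d1*x1 + a1*b1*b2*c1*x1*x2 + a1*b1*b2*c1*d1*x2 + a1*b1*b2*c1*c2*x1 + a1*b1*b2*c1*c2*d1 + (-1)*a1*b1*b2*c1^2*x2 + (-1)*a1*b1*b2*c1^2*d2 + (-1)*a1*b1^2*x1 + (-1)*a1*b1^2*d2*x1*x2 + (-1)*a1*b1^2*d1 + a1*b1^2*d1*x2^2 + a1*b1^2*c2*x1*x2 + a1*b1^2*c2*d2*x1 + (-1)*a1*b1^2*c1*x2^2 + (-1)*a1*b1^2*c1*d2*x2 + a1*b1^2*c1*c2*x2 + a1*b1^2*c1*c2*d2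 + a1*b1^2*c1^2*x1 + a1*b1^2*c1^2*d1 + (-1)*a1*a2*x1*x2 + (-1)*a1*a2*d2*x1 + a1*a2*c2*x1 + a1*a2*c2*d2*x1*x2 + a1*a2*c2*d1 + (-1)*a1*a2*c2*d1*x2^2 + a1*a2*c1*x2 + a1*a2*c1*d2*x2^2 + a1*a2*c1*d1*x1*x2 + (-1)*a1*a2*c1*c2 + (-1)*a1*a2*c1*c2*d2*x2 + (-1)*a1*a2*c1*c2*d1*x1 + a1*a2*c1^2*d2*x1 + (-1)*a1*a2*c1^2*d1*x2 + (-1)*a1*a2*b2*x1 + (-1)*a1*a2*b2*d2*x1*x2 + (-1)*a1*a2*b2*d1 + a1*a2*b2*d1*x2^2 + a1*a2*b2*c2*x1*x2 + a1*a2*b2*c2*d2*x1 + (-1)*a1*a2*b2*c1*x2^2 + (-1)*a1*a2*b2*c1*d2*x2 + a1*a2*b2*c1*c2*x2 + a1*a2*b2*c1*c2*d2 + a1*a2*b2*c1^2*x1 + a1*a2*b2*c1^2*d1 + a1*a2*b1*d2 + (-1)*a1*a2*b1*d2*x2^2 + (-1)*a1*a2*b1*d1*x1*x2 + (-1)*a1*a2*b1*c2 + a1*a2*b1*c2*x2^2 + (-1)*a1*a2*b1*c2*d1*x1 + a1*a2*b1*c1*x1*x2 + a1*a2*b1*c1*d1*x2 + a1*a2*b1*c1*c2*x1 + a1*a2*b1*c1*c2*d1 + (-1)*a1*a2*b1*c1^2*x2 + (-1)*a1*a2*b1*c1^2*d2 + (2)*a1*a2*b1*b2 + (2)*a1*a2*b1*b2*d2*x2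 + (2)*a1*a2*b1*b2*d1*x1 + (-2)*a1*a2*b1*b2*c2*x2 + (-2)*a1*a2*b1*b2*c2*d2 + (-2)*a1*a2*b1*b2*c1*x1 + (-2)*a1*a2*b1*b2*c1*d1 + (-1)*a1^2 + a1^2*x2^2 + (-1)*a1^2*d1*x1 + a1^2*c2*d2 + (-1)*a1^2*c2*d2*x2^2 + (-1)*a1^2*c2*d1*x1*x2 + (2)*a1^2*c1*x1 + a1^2*c1*d2*x1*x2 + (2)*a1^2*c1*d1 + (-1)*a1^2*c1*d1*x2^2 + (-1)*a1^2*c1*c2*d2*x1 + a1^2*c1*c2*d1*x2 + (-1)*a1^2*c1^2 + (-1)*a1^2*c1^2*d2*x2 + (-1)*a1^2*c1^2*d1*x1 + (-1)*a1^2*b2*d2 + a1^2*b2*d2*x2^2 + a1^2*b2*d1*x1*x2 + a1^2*b2*c2 + (-1)*a1^2*b2*c2*x2^2 + a1^2*b2*c2*d1*x1 + (-1)*a1^2*b2*c1*x1*x2 + (-1)*a1^2*b2*c1*d1*x2 + (-1)*a1^2*b2*c1*c2*x1 + (-1)*a1^2*b2*c1*c2*d1 + a1^2*b2*c1^2*x2 + a1^2*b2*c1^2*d2 + (-1)*a1^2*b1*x1 + (-1)*a1^2*b1*d2*x1*x2 + (-1)*a1^2*b1*d1 + a1^2*b1*d1*x2^2 + a1^2*b1*c2*x1*x2 + a1^2*b1*c2*d2*x1 + (-1)*a1^2*b1*c1*x2^2 + (-1)*a1^2*b1*c1*d2*x2 + a1^2*b1*c1*c2*x2 + a1^2*b1*c1*c2*d2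 + a1^2*b1*c1^2*x1 + a1^2*b1*c1^2*d1 + (2)*a1^2*b1^2 + (2)*a1^2*b1^2*d2*x2 + (2)*a1^2*b1^2*d1*x1 + (-2)*a1^2*b1^2*c2*x2 + (-2)*a1^2*b1^2*c2*d2 + (-2)*a1^2*b1^2*c1*x1 + (-2)*a1^2*b1^2*c1*d1)*(d1^2+d2^2-1)).
  { unfold lamX, mpX, mB, fl, cu, cv. ring. }
  assert (Ha' : a1^2+a2^2-1 = 0) by lra. assert (Hb' : b1^2+b2^2-1 = 0) by lra.
  assert (Hc' : c1^2+c2^2-1 = 0) by lra. assert (Hd' : d1^2+d2^2-1 = 0) by lra.
  rewrite Ha', Hb', Hc', Hd' in E. lra.
Qed.


Definition O3 (x y z : pt) := cross (psub y x) (psub z x).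
Definition fL (p q x : pt) := cross (psub q p) (psub x p).

Lemma O3_cis x y z : x < y -> y < z -> z < x + 2*PI -> 0 < O3 (cis x) (cis y) (cis z).
Proof.
  intros H1 H2 H3.
  assert (E : O3 (cis x) (cis y) (cis z) = sin (y - x) + sin (z - y) - sin (z - x)).
  { unfold O3, cross, psub, cis; simpl. rewrite !sin_minus. ring. }
  rewrite E.
  set (A := (y - x)/2). set (B := (z - y)/2).
  replace (y - x) with (2*A) by (unfold A; field).
  replace (z - y) with (2*B) by (unfold B; field).
  replace (z - x) with (2*(A+B)) by (unfold A, B; field).
  rewrite !sin_2a, sin_plus, cos_plus.
  pose proof (sin2_cos2 A) as HA. pose proof (sin2_cos2 B) as HB. unfold Rsqr in HA, HB.
  assert (K : 2 * sin A * cos A + 2 * sin B * cos B -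
     2 * (sin A * cos B + cos A * sin B) * (cos A * cos B - sin A * sin B)
     = 4 * sin A * sin B * (sin A * cos B + cos A * sin B)
       + 2*sin A*cos A*(1 - (sin B*sin B + cos B*cos B)) + 2*sin B*cos B*(1-(sin A*sin A+cos A*cos A))) by ring.
  rewrite HA, HB in K. rewrite K.
  assert (sA : 0 < sin A) by (apply sin_gt_0; unfold A; lra).
  assert (sB : 0 < sin B) by (apply sin_gt_0; unfold B; lra).
  assert (sAB : 0 < sin (A+B)) by (apply sin_gt_0; unfold A, B; lra).
  rewrite sin_plus in sAB.
  assert (0 < sin A * sin B) by (apply Rmult_lt_0_compat; lra).
  assert (0 < sin A * sin B * (sin A * cos B + cos A * sin B)) by (apply Rmult_lt_0_compat; lra).
  nra.
Qed.

Definition inv (q : pt) (r2 : R) (z : pt) : pt :=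
  padd q (pscale (r2 / dot (psub z q) (psub z q)) (psub z q)).

Lemma inv_circle q r2 z : r2 = dot q q - 1 -> dot (psub z q) (psub z q) <> 0 ->
  dot (inv q r2 z) (inv q r2 z) - 1 = r2 * (dot z z - 1) / dot (psub z q) (psub z q).
Proof.
  intros Hr Hz. subst r2. destruct q as [q1 q2], z as [z1 z2].
  unfold inv, dot, padd, pscale, psub in *; simpl in *. field. auto.
Qed.

Lemma inv_inv q r2 z : r2 <> 0 -> dot (psub z q) (psub z q) <> 0 ->
  inv q r2 (inv q r2 z) = z.
Proof.
  intros Hr Hz. destruct q as [q1 q2], z as [z1 z2].
  unfold inv, dot, padd, pscale, psub in *; simpl in *.
  set (N := (z1 - q1) * (z1 - q1) + (z2 - q2) * (z2 - q2)) in *.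
  replace (q1 + r2 / N * (z1 - q1) - q1) with (r2/N*(z1-q1)) by ring.
  replace (q2 + r2 / N * (z2 - q2) - q2) with (r2/N*(z2-q2)) by ring.
  replace (r2 / N * (z1 - q1) * (r2 / N * (z1 - q1)) + r2 / N * (z2 - q2) * (r2 / N * (z2 - q2)))
    with ((r2/N)*(r2/N)*N) by (unfold N; ring).
  f_equal; field; auto.
Qed.

Lemma dot_nonneg v : 0 <= dot v v.
Proof. destruct v; unfold dot; simpl; nra. Qed.

Lemma cs_ineq u v : dot u v * dot u v <= dot u u * dot v v.
Proof. destruct u as [u1 u2], v as [v1 v2]; unfold dot; simpl.
  pose proof (pow2_ge_0 (u1*v2-u2*v1)). nra. Qed.

Lemma ratio_scale u v u' v' K : 0 < K -> dot u' v' = K * dot u v ->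
  dot u' u' * dot v' v' = (K*K) * (dot u u * dot v v) ->
  dot u' v' / (pnorm u' * pnorm v') = dot u v / (pnorm u * pnorm v).
Proof.
  intros HK H1 H2. unfold pnorm.
  rewrite <- !sqrt_mult by apply dot_nonneg.
  rewrite H2, sqrt_mult by (try apply Rmult_le_pos; try apply dot_nonneg; nra).
  rewrite sqrt_square by lra. rewrite H1.
  destruct (Req_dec (sqrt (dot u u * dot v v)) 0) as [E|E].
  - assert (Z : dot u u * dot v v = 0).
    { pose proof (sqrt_sqrt (dot u u * dot v v)) as S.
      rewrite <- S by (apply Rmult_le_pos; apply dot_nonneg). rewrite E; ring. }
    pose proof (cs_ineq u v). rewrite Z in H.
    assert (dot u v = 0) by nra. rewrite H0, E. unfold Rdiv. ring.
  - field. split; lra.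
Qed.

Lemma psub_inv q r x z : psub (inv q r x) (inv q r z) =
  psub (pscale (r / dot (psub x q) (psub x q)) (psub x q)) (pscale (r / dot (psub z q) (psub z q)) (psub z q)).
Proof.
  unfold inv. generalize (r / dot (psub x q) (psub x q)) as s1.
  generalize (r / dot (psub z q) (psub z q)) as s2. intros.
  destruct q, x, z; unfold psub, padd, pscale; simpl; f_equal; ring.
Qed.

Lemma inv_ray q r X mu : mu <> 0 -> dot X X <> 0 ->
  inv q r (padd q (pscale mu X)) = padd q (pscale (r / (mu * dot X X)) X).
Proof.
  intros Hm HX. unfold inv.
  assert (E : psub (padd q (pscale mu X)) q = pscale mu X)
    by (destruct q, X; unfold psub, padd, pscale; simpl; f_equal; ring).
  rewrite E.
  assert (E2 : dot (pscale mu X) (pscale mu X) = mu*mu*dot X X)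
    by (destruct X; unfold dot, pscale; simpl; ring).
  rewrite E2. revert HX. generalize (dot X X) as N. intros N HN.
  destruct X; unfold pscale, padd; simpl; f_equal; f_equal; field; auto.
Qed.

Lemma dot_expand a b c X Z :
  dot (psub (pscale a X) (pscale c Z)) (psub (pscale b X) (pscale c Z))
  = a*b*dot X X - (a*c+b*c)*dot X Z + c*c*dot Z Z.
Proof. destruct X, Z; unfold dot, psub, pscale; simpl; ring. Qed.

Lemma inv_angle q r2 x z mu : 0 < r2 -> 0 < mu ->
  dot (psub x q) (psub x q) <> 0 -> dot (psub z q) (psub z q) <> 0 ->
  angle (inv q r2 x) (inv q r2 z) (inv q r2 (padd q (pscale mu (psub x q))))
  = angle x z (padd q (pscale mu (psub x q))).
Proof.
  intros Hr Hmu Hx Hz. unfold angle. f_equal.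
  rewrite (inv_ray q r2 (psub x q) mu) by (auto; lra).
  assert (Ex : inv q r2 x = padd q (pscale (r2 / dot (psub x q) (psub x q)) (psub x q))) by reflexivity.
  rewrite Ex. unfold inv.
  set (X := psub x q) in *. set (Z := psub z q) in *.
  assert (S1 : forall u v, psub (padd q u) (padd q v) = psub u v)
    by (intros; destruct q, u, v; unfold psub, padd; simpl; f_equal; ring).
  rewrite !S1.
  assert (Exz : psub x z = psub (pscale 1 X) (pscale 1 Z))
    by (unfold X, Z; destruct q, x, z; unfold psub, pscale; simpl; f_equal; ring).
  assert (Eyz : psub (padd q (pscale mu X)) z = psub (pscale mu X) (pscale 1 Z))
    by (unfold X, Z; destruct q, x, z; unfold psub, padd, pscale; simpl; f_equal; ring).
  rewrite Exz, Eyz.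
  apply ratio_scale with (K := r2*r2/(mu*dot X X*dot Z Z)).
  - pose proof (dot_nonneg X); pose proof (dot_nonneg Z).
    apply Rdiv_lt_0_compat. apply Rmult_lt_0_compat; lra.
    apply Rmult_lt_0_compat; [apply Rmult_lt_0_compat|]; lra.
  - rewrite !dot_expand. clearbody X Z. generalize (dot X Z) as XZ. intro XZ.
    field. repeat split; auto; lra.
  - rewrite !dot_expand. clearbody X Z. generalize (dot X Z) as XZ. intro XZ.
    field. repeat split; auto; lra.
Qed.

Lemma angle_sym x z y : angle x z y = angle y z x.
Proof.
  unfold angle. f_equal. destruct x, y, z; unfold dot, psub; simpl. f_equal; ring.
Qed.

Lemma circle_iff z : on_unit_circle z <-> dot z z = 1.
Proof.
  unfold on_unit_circle, pnorm. split; intro H.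
  - pose proof (sqrt_sqrt (dot z z) (dot_nonneg z)). rewrite H in H0. lra.
  - rewrite H. apply sqrt_1.
Qed.

Lemma vB2_eq x y x' y' (F : pt -> pt) :
  (forall z, on_unit_circle z -> on_unit_circle (F z)) ->
  (forall z, on_unit_circle z -> F (F z) = z) ->
  (forall z, on_unit_circle z -> angle x z y = angle x' (F z) y') ->
  vB2 x y = vB2 x' y'.
Proof.
  intros H1 H2 H3. unfold vB2. f_equal. apply Lub_Rbar_eqset. intro t. split.
  - intros [z [Hz ->]]. exists (F z). split; auto.
  - intros [z [Hz ->]]. exists (F z). split; auto. rewrite H3 by auto. rewrite H2; auto.
Qed.


Ltac dpts := repeat match goal with p : pt |- _ => destruct p end;
  unfold O3, fL, cross, dot, psub, padd, pscale in *; simpl in *.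

Definition MB (a b c d : pt) :=
  mB (fst a) (snd a) (fst b) (snd b) (fst c) (snd c) (fst d) (snd d).
Definition MPA (a b c d : pt) :=
  mpX (fst a) (snd a) (fst d) (snd d) (fst b) (snd b) (fst c) (snd c)
      (fst a) (snd a) (fst b) (snd b) (fst c) (snd c) (fst d) (snd d).
Definition LA (a b c d : pt) :=
  lamX (fst a) (snd a) (fst d) (snd d) (fst b) (snd b) (fst c) (snd c)
      (fst a) (snd a) (fst b) (snd b) (fst c) (snd c) (fst d) (snd d).
Definition MPC (a b c d : pt) :=
  mpX (fst a) (snd a) (fst c) (snd c) (fst b) (snd b) (fst d) (snd d)
      (fst a) (snd a) (fst b) (snd b) (fst c) (snd c) (fst d) (snd d).
Definition LC (a b c d : pt) :=
  lamX (fst a) (snd a) (fst c) (snd c) (fst b) (snd b) (fst d) (snd d)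
      (fst a) (snd a) (fst b) (snd b) (fst c) (snd c) (fst d) (snd d).

Lemma sq1 u v : u*u+v*v = 1 -> u^2+v^2 = 1.
Proof. intro H; rewrite <- H; ring. Qed.

Lemma pencilA a b c d x : dot a a = 1 -> dot b b = 1 -> dot c c = 1 -> dot d d = 1 ->
  MB a b c d * (fL a d x * fL b c x) + MPA a b c d * (fL a b x * fL c d x)
  = LA a b c d * (dot x x - 1).
Proof.
  intros Ha Hb Hc Hd. destruct a, b, c, d, x. unfold dot in *; simpl in *.
  replace (r7*r7+r8*r8-1) with (r7^2+r8^2-1) by ring.
  apply pencilA_c; apply sq1; auto.
Qed.

Lemma pencilC a b c d x : dot a a = 1 -> dot b b = 1 -> dot c c = 1 -> dot d d = 1 ->
  MB a b c d * (fL a c x * fL b d x) + MPC a b c d * (fL a b x * fL c d x)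
  = LC a b c d * (dot x x - 1).
Proof.
  intros Ha Hb Hc Hd. destruct a, b, c, d, x. unfold dot in *; simpl in *.
  replace (r7*r7+r8*r8-1) with (r7^2+r8^2-1) by ring.
  apply pencilC_c; apply sq1; auto.
Qed.

Lemma MB_eq a b c d : MB a b c d = dot (psub b a) (psub b a) * dot (psub d c) (psub d c).
Proof. unfold MB, mB, cu, cv. dpts. ring. Qed.

Lemma fL_lin p q g e t : fL p q (padd g (pscale t e)) = fL p q g + t * cross (psub q p) e.
Proof. dpts. ring. Qed.

Lemma dot_lin g e t : dot (padd g (pscale t e)) (padd g (pscale t e)) - 1
  = (dot g g - 1) + t*(2*dot g e) + t*t*dot e e.
Proof. dpts. ring. Qed.

Lemma chord a b t : dot a a = 1 -> dot b b = 1 ->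
  dot (padd a (pscale t (psub b a))) (padd a (pscale t (psub b a))) - 1
  = (t*t - t) * dot (psub b a) (psub b a).
Proof.
  intros Ha Hb.
  assert (E : dot (padd a (pscale t (psub b a))) (padd a (pscale t (psub b a))) - 1
    - (t*t - t) * dot (psub b a) (psub b a) = (1-t)*(dot a a - 1) + t*(dot b b - 1)) by (dpts; ring).
  rewrite Ha, Hb in E. lra.
Qed.

Lemma sqp x : x <> 0 -> 0 < x*x.
Proof. intro H. pose proof (Rsqr_pos_lt x H). unfold Rsqr in *. auto. Qed.

Lemma dot_pos_cross v w : cross v w <> 0 -> 0 < dot v v.
Proof.
  intro H. destruct v as [v1 v2], w as [w1 w2]; unfold cross, dot in *; simpl in *.
  destruct (Req_dec v1 0); destruct (Req_dec v2 0).
  - subst. exfalso. apply H; ring.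
  - pose proof (sqp v2 H1); nra. - pose proof (sqp v1 H0); nra. - pose proof (sqp v1 H0); nra.
Qed.

Lemma dot_zero_any v w : dot v v = 0 -> dot w v = 0.
Proof.
  intro H. destruct v as [v1 v2], w as [w1 w2]; unfold dot in *; simpl in *.
  assert (v1 = 0) by nra. assert (v2 = 0) by nra. subst; ring.
Qed.

Lemma dot_pos_neq x q : dot x x <> dot q q -> 0 < dot (psub x q) (psub x q).
Proof.
  intro H. destruct x as [x1 x2], q as [q1 q2]; unfold dot, psub in *; simpl in *.
  destruct (Req_dec x1 q1); destruct (Req_dec x2 q2).
  - subst. exfalso; apply H; ring.
  - assert (x2 - q2 <> 0) by lra. pose proof (sqp _ H2); nra.
  - assert (x1 - q1 <> 0) by lra. pose proof (sqp _ H2); nra.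
  - assert (x1 - q1 <> 0) by lra. pose proof (sqp _ H2); nra.
Qed.

Lemma par_vec w v : cross w v = 0 -> dot w w <> 0 -> v = pscale (dot v w / dot w w) w.
Proof.
  intros H1 H2. destruct w as [w1 w2], v as [v1 v2]; unfold cross, dot, pscale in *; simpl in *.
  assert (E1 : w2*(w1*v2 - w2*v1) = 0) by (rewrite H1; ring).
  assert (E2 : w1*(w1*v2 - w2*v1) = 0) by (rewrite H1; ring).
  f_equal; field_simplify_eq; auto; lra.
Qed.

Lemma prod3 x y z : 0 < x*y -> 0 < x*z -> 0 < y*z.
Proof. intros H1 H2. assert (0 < (x*y)*(x*z)) by (apply Rmult_lt_0_compat; auto). nra. Qed.

Lemma between x y r q : (x-r)*(y-r) < 0 -> 0 < (x-q)*(y-q) -> 0 < (x-q)*(r-q).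
Proof.
  intros H1 H2.
  destruct (Rlt_le_dec x r); destruct (Rlt_le_dec y r); destruct (Rlt_le_dec x q);
    destruct (Rlt_le_dec y q); destruct (Rlt_le_dec r q);
    try (assert (0 <= (x-r)*(y-r)) by (apply Rmult_le_pos; lra) || 
         assert (0 <= (r-x)*(r-y)) by (apply Rmult_le_pos; lra); nra);
    try (assert ((x-q)*(y-q) <= 0) by (apply Rmult_le_0_l || apply Rmult_le_0_r; lra)|| idtac);
    try nra.
Qed.

Lemma inv_line g e sq k t : dot e e <> 0 -> t <> sq ->
  inv (padd g (pscale sq e)) (k * dot e e) (padd g (pscale t e))
  = padd g (pscale (sq + k/(t - sq)) e).
Proof.
  intros He Ht. assert (t - sq <> 0) by lra.
  destruct g as [g1 g2], e as [e1 e2]; unfold inv, dot, padd, pscale, psub in *; simpl in *.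
  replace (g1 + t * e1 - (g1 + sq * e1)) with ((t-sq)*e1) by ring.
  replace (g2 + t * e2 - (g2 + sq * e2)) with ((t-sq)*e2) by ring.
  replace ((t - sq) * e1 * ((t - sq) * e1) + (t - sq) * e2 * ((t - sq) * e2))
    with ((t-sq)*(t-sq)*(e1*e1+e2*e2)) by ring.
  f_equal; field; split; auto.
Qed.

Lemma oneD bet gam t t' : bet <> 0 -> bet*t+gam <> 0 -> bet*t*t' + gam*(t+t') = 0 ->
  -gam/bet + (gam*gam/(bet*bet))/(t - -gam/bet) = t'.
Proof.
  intros H1 H2 H3.
  assert (t' = - gam*t/(bet*t+gam)).
  { field_simplify_eq; auto. lra. }
  subst t'. field. split; auto.
Qed.

Lemma same_ray g e sq t1 t2 : t1 <> sq ->
  padd g (pscale t2 e) = padd (padd g (pscale sq e))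
     (pscale ((t2-sq)/(t1-sq)) (psub (padd g (pscale t1 e)) (padd g (pscale sq e)))).
Proof.
  intro H. assert (t1 - sq <> 0) by lra. dpts. f_equal; field; auto.
Qed.

Lemma hge h g : h = padd g (pscale 1 (psub h g)).
Proof. dpts. f_equal; ring. Qed.

Lemma L_fab_on a b t : fL a b (padd a (pscale t (psub b a))) = 0.
Proof. dpts. ring. Qed.
Lemma L_fcd_g a b c d t : fL c d (padd a (pscale t (psub b a))) = O3 a c d - t * cross (psub b a) (psub d c).
Proof. dpts. ring. Qed.
Lemma L_t0num a c d : cross (psub c a) (psub d c) = O3 a c d.
Proof. dpts. ring. Qed.
Lemma L_bcd a b c d : O3 a c d - cross (psub b a) (psub d c) = O3 b c d.
Proof. dpts. ring. Qed.
Lemma L_fbc_g a b c t : fL b c (padd a (pscale t (psub b a))) = -(t-1) * O3 a b c.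
Proof. dpts. ring. Qed.
Lemma L_fad_g a b d t : fL a d (padd a (pscale t (psub b a))) = - t * O3 a b d.
Proof. dpts. ring. Qed.
Lemma L_h_on_bc b c s : fL b c (padd b (pscale s (psub c b))) = 0.
Proof. dpts. ring. Qed.
Lemma L_fac_h a b c s : fL a c (padd b (pscale s (psub c b))) = -(1-s) * O3 a b c.
Proof. dpts. ring. Qed.
Lemma L_fbd_h b c d s : fL b d (padd b (pscale s (psub c b))) = - s * O3 b c d.
Proof. dpts. ring. Qed.
Lemma L_fac_l a c d t : fL a c (padd a (pscale t (psub d a))) = t * O3 a c d.
Proof. dpts. ring. Qed.
Lemma L_fbd_l a b d t : fL b d (padd a (pscale t (psub d a))) = (1-t) * O3 a b d.
Proof. dpts. ring. Qed.
Lemma L_cr1 a b c : cross (psub c b) (psub b a) = - O3 a b c.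
Proof. dpts. ring. Qed.
Lemma L_cr2 b c d : cross (psub d c) (psub c b) = - O3 b c d.
Proof. dpts. ring. Qed.
Lemma L_cr3 a b d : cross (psub d a) (psub b a) = - O3 a b d.
Proof. dpts. ring. Qed.
Lemma L_lis p q g : cross (psub p g) (psub q p) = fL p q g.
Proof. dpts. ring. Qed.
Lemma L_cross_anti v w : cross v w = - cross w v.
Proof. dpts. ring. Qed.
Lemma L_line_back a d l : fL a d l = 0 -> dot (psub d a) (psub d a) <> 0 ->
  l = padd a (pscale (dot (psub l a) (psub d a) / dot (psub d a) (psub d a)) (psub d a)).
Proof.
  intros H1 H2. pose proof (par_vec (psub d a) (psub l a) H1 H2) as E.
  destruct l as [l1 l2], a as [a1 a2]. unfold psub, padd, pscale in *; simpl in *.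
  injection E; intros E2 E1. f_equal; lra.
Qed.

Lemma dot_line_diff g e t u :
  dot (psub (padd g (pscale t e)) (padd g (pscale u e))) (psub (padd g (pscale t e)) (padd g (pscale u e)))
  = (t-u)*(t-u)*dot e e.
Proof. dpts. ring. Qed.


Lemma pencilA_line a b c d g e : dot a a = 1 -> dot b b = 1 -> dot c c = 1 -> dot d d = 1 ->
  fL a b g = 0 -> fL c d g = 0 ->
  MB a b c d * (fL a d g * fL b c g) = LA a b c d * (dot g g - 1) /\
  MB a b c d * (fL a d g * cross (psub c b) e + fL b c g * cross (psub d a) e)
    = LA a b c d * (2 * dot g e).
Proof.
  intros Ha Hb Hc Hd H1 H2.
  pose proof (pencilA a b c d g Ha Hb Hc Hd) as E0.
  pose proof (pencilA a b c d (padd g (pscale 1 e)) Ha Hb Hc Hd) as E1.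
  pose proof (pencilA a b c d (padd g (pscale (-1) e)) Ha Hb Hc Hd) as E2.
  rewrite !fL_lin, dot_lin in E1, E2. rewrite H1, H2 in E0, E1, E2.
  split; lra.
Qed.

Lemma pencilC_line a b c d g e : dot a a = 1 -> dot b b = 1 -> dot c c = 1 -> dot d d = 1 ->
  fL a b g = 0 -> fL c d g = 0 ->
  MB a b c d * (fL a c g * fL b d g) = LC a b c d * (dot g g - 1) /\
  MB a b c d * (fL a c g * cross (psub d b) e + fL b d g * cross (psub c a) e)
    = LC a b c d * (2 * dot g e).
Proof.
  intros Ha Hb Hc Hd H1 H2.
  pose proof (pencilC a b c d g Ha Hb Hc Hd) as E0.
  pose proof (pencilC a b c d (padd g (pscale 1 e)) Ha Hb Hc Hd) as E1.
  pose proof (pencilC a b c d (padd g (pscale (-1) e)) Ha Hb Hc Hd) as E2.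
  rewrite !fL_lin, dot_lin in E1, E2. rewrite H1, H2 in E0, E1, E2.
  split; lra.
Qed.

Lemma tau_between t N : (t*t - t)*N < 0 -> 0 < N -> 0 < t /\ t < 1.
Proof. intros H1 H2. assert (t*t - t < 0). { destruct (Rlt_le_dec (t*t-t) 0); auto. nra. } nra. Qed.
Lemma neg_prod_root f0 al x y : (f0 + x*al)*(f0 + y*al) < 0 ->
  al <> 0 /\ (x - f0 / - al)*(y - f0 / - al) < 0.
Proof.
  intro H. assert (al <> 0) by (intro E; subst; nra). split; auto.
  assert (E : (x - f0 / - al)*(y - f0 / - al) = (f0 + x*al)*(f0 + y*al) / (al*al)) by (field; auto).
  rewrite E. apply Rdiv_neg_pos; auto. assert (0 < al*al) by (pose proof (Rsqr_pos_lt al H0); unfold Rsqr in *; auto). lra.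
Qed.
Lemma pos_div a b : 0 < a*b -> 0 < b / a.
Proof. intro H. assert (a <> 0) by (intro E; subst; lra).
  replace (b/a) with (a*b/(a*a)) by (field; auto). apply Rdiv_lt_0_compat; auto.
  pose proof (Rsqr_pos_lt a H0); unfold Rsqr in *; auto. Qed.
Lemma sgn1 s t A B : 0 < s -> s < 1 -> 0 < t -> 0 < A*B -> (-(1-s)*A)*(t*B) < 0.
Proof. intros. assert (0 < (1-s)*t) by (apply Rmult_lt_0_compat; lra).
  replace ((-(1-s)*A)*(t*B)) with (-(((1-s)*t)*(A*B))) by ring.
  assert (0 < ((1-s)*t)*(A*B)) by (apply Rmult_lt_0_compat; auto). lra. Qed.
Lemma sgn2 s t A B : 0 < s -> t < 1 -> 0 < A*B -> (-s*B)*((1-t)*A) < 0.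
Proof. intros. assert (0 < s*(1-t)) by (apply Rmult_lt_0_compat; lra).
  replace ((-s*B)*((1-t)*A)) with (-((s*(1-t))*(A*B))) by ring.
  assert (0 < (s*(1-t))*(A*B)) by (apply Rmult_lt_0_compat; auto). lra. Qed.
Lemma slq_lem bet gam sl : bet <> 0 -> bet+gam <> 0 -> bet*1*sl+gam*(1+sl) = 0 ->
  0 < gam*gam/(bet*bet) -> 0 < (1 - -gam/bet)*(sl - -gam/bet).
Proof.
  intros H1 H2 H3 H4.
  assert (El : sl = - gam / (bet + gam)) by (field_simplify_eq; auto; lra).
  replace ((1 - -gam/bet)*(sl - -gam/bet)) with (gam*gam/(bet*bet)) by (rewrite El; field; auto).
  auto.
Qed.
Lemma F2_lem bet gam M fac fbd aac abd LC : M<>0 -> aac<>0 -> abd<>0 ->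
  M*(fac*fbd) = LC*gam -> M*(fac*abd+fbd*aac) = LC*bet ->
  bet*(fac/-aac)*(fbd/-abd) + gam*(fac/-aac + fbd/-abd) = 0.
Proof.
  intros H1 H2 H3 E0 E1.
  assert (E : bet*(fac / - aac)*(fbd / - abd) + gam*(fac / - aac + fbd / - abd)
       = (bet*(M*(fac*fbd)) - gam*(M*(fac*abd + fbd*aac)))/(M*aac*abd))
      by (field; repeat split; auto).
  rewrite E, E0, E1. unfold Rdiv. ring.
Qed.
Lemma nz_of_pos x y z : 0 < x*(y - z) -> y - z <> 0.
Proof. intros H E. rewrite E, Rmult_0_r in H. exact (Rlt_irrefl 0 H). Qed.
Lemma neq_of_sub x y : x - y <> 0 -> x <> y.
Proof. intros H E. apply H. rewrite E. ring. Qed.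
Lemma lin_nz bet gam t : bet <> 0 -> t - (-gam/bet) <> 0 -> bet*t+gam <> 0.
Proof. intros H1 H2 E. apply H2. field_simplify_eq; auto. lra. Qed.
Lemma lt1 x : x - 1 < 0 -> x <= 1.
Proof. intro; lra. Qed.
Lemma circ_fix x r2 N : x - 1 = r2*(1-1)/N -> x = 1.
Proof. intro H. replace (r2*(1-1)/N) with 0 in H by (unfold Rdiv; ring). lra. Qed.


Lemma config a b c d h s :
  dot a a = 1 -> dot b b = 1 -> dot c c = 1 -> dot d d = 1 ->
  0 < s -> s < 1 -> h = padd b (pscale s (psub c b)) ->
  cross (psub b a) (psub d c) <> 0 ->
  0 < O3 a b c * O3 a b d -> 0 < O3 a b c * O3 a c d -> 0 < O3 a b c * O3 b c d ->
  let g := LIS a b c d in let j := LIS g h a c in let k := LIS g h b d in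
  let l := LIS g h a d in
  vB2 h j = vB2 k l /\ vB2 h k = vB2 j l.
Proof.
  intros Ha Hb Hc Hd Hs0 Hs1 Hh HD H1 H2 H3 g j k l.
  set (D := cross (psub b a) (psub d c)) in *.
  set (t0 := cross (psub c a) (psub d c) / D).
  assert (Hg : g = padd a (pscale t0 (psub b a))) by reflexivity.
  set (e := psub h g).
  set (sj := cross (psub a g) (psub c a) / cross (psub h g) (psub c a)).
  set (sk := cross (psub b g) (psub d b) / cross (psub h g) (psub d b)).
  set (sl := cross (psub a g) (psub d a) / cross (psub h g) (psub d a)).
  assert (Hj : j = padd g (pscale sj e)) by reflexivity.
  assert (Hk : k = padd g (pscale sk e)) by reflexivity.
  assert (Hl : l = padd g (pscale sl e)) by reflexivity.
  assert (Hhe : h = padd g (pscale 1 e)) by apply hge.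
  assert (Hsj : sj = fL a c g / - cross (psub c a) e)
    by (unfold sj; rewrite L_lis, (L_cross_anti (psub h g)); reflexivity).
  assert (Hsk : sk = fL b d g / - cross (psub d b) e)
    by (unfold sk; rewrite L_lis, (L_cross_anti (psub h g)); reflexivity).
  assert (Hsl : sl = fL a d g / - cross (psub d a) e)
    by (unfold sl; rewrite L_lis, (L_cross_anti (psub h g)); reflexivity).
  clearbody sj sk sl e j k l g.
  assert (Oabc0 : O3 a b c <> 0) by (intro E; rewrite E in H1; lra).
  assert (Oabd0 : O3 a b d <> 0) by (intro E; rewrite E in H1; lra).
  assert (Oacd0 : O3 a c d <> 0) by (intro E; rewrite E in H2; lra).
  assert (Obcd0 : O3 b c d <> 0) by (intro E; rewrite E in H3; lra).
  assert (P1 : 0 < O3 a c d * O3 b c d) by (apply (prod3 (O3 a b c)); auto).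
  assert (P2 : 0 < O3 a b d * O3 b c d) by (apply (prod3 (O3 a b c)); auto).
  assert (Nba : 0 < dot (psub b a) (psub b a)) by (apply (dot_pos_cross _ (psub c a)); exact Oabc0).
  assert (Ncb : 0 < dot (psub c b) (psub c b))
    by (apply (dot_pos_cross _ (psub b a)); rewrite L_cr1; lra).
  assert (Ndc : 0 < dot (psub d c) (psub d c))
    by (apply (dot_pos_cross _ (psub c b)); rewrite L_cr2; lra).
  assert (Nda : 0 < dot (psub d a) (psub d a))
    by (apply (dot_pos_cross _ (psub b a)); rewrite L_cr3; lra).
  assert (Ht0a : t0 * D = O3 a c d) by (unfold t0; rewrite L_t0num; field; auto).
  assert (Ht0b : (t0 - 1) * D = O3 b c d)
    by (rewrite <- (L_bcd a b c d); fold D; rewrite <- Ht0a; ring).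
  assert (Ht0 : 0 < t0 * (t0 - 1)).
  { assert (0 < (t0*D)*((t0-1)*D)) by (rewrite Ht0a, Ht0b; auto).
    assert (0 < D*D) by (apply sqp; auto). nra. }
  set (gam := dot g g - 1).
  assert (Hgam : gam = (t0*t0 - t0) * dot (psub b a) (psub b a))
    by (unfold gam; rewrite Hg; apply chord; auto).
  assert (Gpos : 0 < gam) by (rewrite Hgam; apply Rmult_lt_0_compat; nra).
  assert (Hhm : dot h h - 1 = (s*s - s) * dot (psub c b) (psub c b))
    by (rewrite Hh; apply chord; auto).
  assert (Hhin : dot h h - 1 < 0) by (rewrite Hhm; assert (s*s-s<0) by nra; nra).
  set (bet := 2 * dot g e).
  assert (Hhexp : dot h h - 1 = gam + 1*bet + 1*1*dot e e)
    by (rewrite Hhe at 1 2; rewrite dot_lin; reflexivity).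
  pose proof (dot_nonneg e) as Ee.
  assert (BG : bet + gam < 0) by lra.
  assert (Bneg : bet < 0) by lra.
  assert (Epos : 0 < dot e e).
  { destruct (Rle_lt_or_eq_dec 0 (dot e e) Ee) as [?|E]; auto.
    exfalso. assert (dot g e = 0) by (apply dot_zero_any; auto). unfold bet in Bneg. lra. }
  assert (Fab : fL a b g = 0) by (rewrite Hg; apply L_fab_on).
  assert (Fcd : fL c d g = 0) by (rewrite Hg, L_fcd_g; fold D; lra).
  assert (Fbc : fL b c g = -(t0-1) * O3 a b c) by (rewrite Hg; apply L_fbc_g).
  assert (Fad : fL a d g = - t0 * O3 a b d) by (rewrite Hg; apply L_fad_g).
  assert (t0nz : t0 <> 0) by (intro E; rewrite E in Ht0; lra).
  assert (t01 : t0 - 1 <> 0) by (intro E; rewrite E in Ht0; lra).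
  assert (Fbcnz : fL b c g <> 0)
    by (rewrite Fbc; apply Rmult_integral_contrapositive; split; auto; lra).
  assert (Fadnz : fL a d g <> 0)
    by (rewrite Fad; apply Rmult_integral_contrapositive; split; auto; lra).
  assert (Hbc : fL b c g = - cross (psub c b) e).
  { pose proof (L_h_on_bc b c s) as E. rewrite <- Hh, Hhe, fL_lin in E. lra. }
  destruct (pencilA_line a b c d g e Ha Hb Hc Hd Fab Fcd) as [EA0 EA1].
  destruct (pencilC_line a b c d g e Ha Hb Hc Hd Fab Fcd) as [EC0 EC1].
  set (M := MB a b c d) in *.
  assert (Mpos : 0 < M) by (unfold M; rewrite MB_eq; apply Rmult_lt_0_compat; auto).
  change (dot g g - 1) with gam in EA0, EC0.
  change (2 * dot g e) with bet in EA1, EC1.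
  set (aad := cross (psub d a) e) in *.
  set (abc := cross (psub c b) e) in *.
  set (aac := cross (psub c a) e) in *.
  set (abd := cross (psub d b) e) in *.
  set (fad := fL a d g) in *. set (fbc := fL b c g) in *.
  set (fac := fL a c g) in *. set (fbd := fL b d g) in *.
  assert (abcnz : abc <> 0) by (intro E; apply Fbcnz; rewrite Hbc, E; ring).
  assert (F1 : fad * (bet + gam) = gam * aad).
  { assert (X : M * abc * (fad*(bet+gam) - gam*aad)
        = bet*(M*abc*fad + LA a b c d*gam) + gam*(M*abc*(fad - aad) - LA a b c d*bet)) by ring.
    rewrite Hbc in EA0, EA1.
    assert (Y1 : M*abc*fad + LA a b c d*gam = 0) by lra.
    assert (Y2 : M*abc*(fad - aad) - LA a b c d*bet = 0) by lra.
    rewrite Y1, Y2 in X.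
    assert (M*abc <> 0) by (apply Rmult_integral_contrapositive; split; lra || auto).
    assert (fad*(bet+gam) - gam*aad = 0).
    { apply (Rmult_eq_reg_l (M*abc)); auto. rewrite X. ring. }
    lra. }
  assert (aadnz : aad <> 0).
  { intro E. rewrite E in F1. assert (fad * (bet+gam) = 0) by lra.
    apply Rmult_integral in H. destruct H; [apply Fadnz; auto | lra]. }
  assert (Rl : bet*1*sl + gam*(1+sl) = 0).
  { rewrite Hsl. fold aad fad. field_simplify_eq; auto. lra. }
  assert (bnz : bet <> 0) by lra.
  set (sq := - gam / bet). set (kk := gam*gam/(bet*bet)). set (r2 := kk * dot e e).
  set (q := padd g (pscale sq e)).
  assert (kpos : 0 < kk) by (unfold kk; apply Rdiv_lt_0_compat; apply sqp; lra).
  assert (r2pos : 0 < r2) by (unfold r2; apply Rmult_lt_0_compat; auto).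
  assert (Hq : dot q q - 1 = r2).
  { unfold q. rewrite dot_lin. fold gam. change (2 * dot g e) with bet.
    unfold r2, kk, sq. field. auto. }
  assert (Hqz : forall z, dot z z <= 1 -> 0 < dot (psub z q) (psub z q)).
  { intros z Hz. apply dot_pos_neq. lra. }
  assert (Hsq1 : 1 <> sq) by (intro E; unfold sq in E;
      assert (bet*1 + gam = 0) by (rewrite E; field; auto); lra).
  assert (Phl : inv q r2 h = l).
  { rewrite Hhe at 1. unfold q, r2. rewrite inv_line by lra. rewrite Hl. f_equal. f_equal.
    unfold sq, kk. apply oneD; auto; lra. }
  assert (Hlin : dot l l - 1 < 0).
  { rewrite <- Phl. rewrite inv_circle; auto.
    - assert (0 < dot (psub h q) (psub h q)) by (apply Hqz; lra).
      apply Rdiv_neg_pos; [apply Rmult_pos_neg; lra | lra].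
    - apply Rgt_not_eq, Hqz; lra. }
  assert (Fadl : fL a d l = 0).
  { rewrite Hl, fL_lin, Hsl. fold aad fad. field. auto. }
  assert (Nda' : dot (psub d a) (psub d a) <> 0) by lra.
  pose proof (L_line_back a d l Fadl Nda') as Hl2.
  set (tau := dot (psub l a) (psub d a) / dot (psub d a) (psub d a)) in Hl2.
  clearbody tau.
  assert (Htau : 0 < tau /\ tau < 1).
  { apply (tau_between tau (dot (psub d a) (psub d a))); auto.
    rewrite <- chord by auto. rewrite <- Hl2. exact Hlin. }
  destruct Htau as [Ht1 Ht2].
  (* j strictly between h and l *)
  assert (Sj : (fac + 1*aac)*(fac + sl*aac) < 0).
  { assert (E1 : fac + 1*aac = fL a c h) by (rewrite Hhe; rewrite fL_lin; reflexivity).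
    assert (E2 : fac + sl*aac = fL a c l) by (rewrite Hl, fL_lin; reflexivity).
    rewrite E1, E2. rewrite Hh at 1. rewrite L_fac_h. rewrite Hl2, L_fac_l.
    apply sgn1; auto. }
  assert (Sk : (fbd + 1*abd)*(fbd + sl*abd) < 0).
  { assert (E1 : fbd + 1*abd = fL b d h) by (rewrite Hhe; rewrite fL_lin; reflexivity).
    assert (E2 : fbd + sl*abd = fL b d l) by (rewrite Hl, fL_lin; reflexivity).
    rewrite E1, E2. rewrite Hh at 1. rewrite L_fbd_h. rewrite Hl2, L_fbd_l.
    apply sgn2; auto. }
  destruct (neg_prod_root _ _ _ _ Sj) as [aacnz Bj].
  destruct (neg_prod_root _ _ _ _ Sk) as [abdnz Bk].
  rewrite <- Hsj in Bj. rewrite <- Hsk in Bk.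
  (* same side of q *)
  clear EA1 EA0.
  assert (bgnz : bet + gam <> 0) by (apply Rlt_not_eq; exact BG).
  assert (Slq : 0 < (1 - sq)*(sl - sq)) by (unfold sq; apply slq_lem; assumption).
  assert (Sjq : 0 < (1 - sq)*(sj - sq)) by (apply (between 1 sl sj sq); assumption).
  assert (Skq : 0 < (1 - sq)*(sk - sq)) by (apply (between 1 sl sk sq); assumption).
  assert (F2 : bet*sj*sk + gam*(sj+sk) = 0).
  { rewrite Hsj, Hsk. apply (F2_lem bet gam M fac fbd aac abd (LC a b c d));
      try assumption. apply Rgt_not_eq; exact Mpos. }
  clear EC0 EC1.
  assert (sjq : sj - sq <> 0) by exact (nz_of_pos _ _ _ Sjq).
  assert (skq : sk - sq <> 0) by exact (nz_of_pos _ _ _ Skq).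
  assert (Enz : dot e e <> 0) by (apply Rgt_not_eq; exact Epos).
  assert (Pjk : inv q r2 j = k).
  { rewrite Hj. unfold q, r2. rewrite inv_line by (exact Enz || apply neq_of_sub; exact sjq).
    rewrite Hk. f_equal. f_equal.
    unfold sq, kk. apply oneD; [exact bnz | apply lin_nz; [exact bnz | exact sjq] | exact F2]. }
  assert (Djq : dot (psub j q) (psub j q) <> 0).
  { rewrite Hj. unfold q. rewrite dot_line_diff.
    apply Rgt_not_eq. apply Rmult_lt_0_compat; [apply sqp; exact sjq | exact Epos]. }
  assert (Pkj : inv q r2 k = j).
  { rewrite <- Pjk; apply inv_inv; [apply Rgt_not_eq; exact r2pos | exact Djq]. }
  assert (Dhq : dot (psub h q) (psub h q) <> 0)
    by (apply Rgt_not_eq, Hqz, lt1; exact Hhin).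
  assert (Hjray : j = padd q (pscale ((sj-sq)/(1-sq)) (psub h q))).
  { rewrite Hj, Hhe. unfold q. apply same_ray. exact Hsq1. }
  assert (Hkray : k = padd q (pscale ((sk-sq)/(1-sq)) (psub h q))).
  { rewrite Hk, Hhe. unfold q. apply same_ray. exact Hsq1. }
  assert (muj : 0 < (sj-sq)/(1-sq)) by (apply pos_div; exact Sjq).
  assert (muk : 0 < (sk-sq)/(1-sq)) by (apply pos_div; exact Skq).
  assert (Circ1 : forall z, on_unit_circle z -> on_unit_circle (inv q r2 z)).
  { intros z Hz. apply circle_iff in Hz. apply circle_iff.
    assert (Dz : dot (psub z q) (psub z q) <> 0)
      by (apply Rgt_not_eq, Hqz; right; exact Hz).
    pose proof (inv_circle q r2 z (eq_sym Hq) Dz) as E. rewrite Hz in E.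
    exact (circ_fix _ _ _ E). }
  assert (Circ2 : forall z, on_unit_circle z -> inv q r2 (inv q r2 z) = z).
  { intros z Hz. apply circle_iff in Hz. apply inv_inv; [apply Rgt_not_eq; exact r2pos|].
    apply Rgt_not_eq, Hqz; right; exact Hz. }
  split.
  - apply (vB2_eq _ _ _ _ (inv q r2)); [exact Circ1 | exact Circ2 |].
    intros z Hz. apply circle_iff in Hz.
    assert (Dz : dot (psub z q) (psub z q) <> 0)
      by (apply Rgt_not_eq, Hqz; right; exact Hz).
    rewrite Hjray at 1. rewrite <- (inv_angle q r2 h z ((sj-sq)/(1-sq))) by assumption.
    rewrite <- Hjray, Phl, Pjk. apply angle_sym.
  - apply (vB2_eq _ _ _ _ (inv q r2)); [exact Circ1 | exact Circ2 |].
    intros z Hz. apply circle_iff in Hz.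
    assert (Dz : dot (psub z q) (psub z q) <> 0)
      by (apply Rgt_not_eq, Hqz; right; exact Hz).
    rewrite Hkray at 1. rewrite <- (inv_angle q r2 h z ((sk-sq)/(1-sq))) by assumption.
    rewrite <- Hkray, Phl, Pkj. apply angle_sym.
Qed.


Lemma dot_cis t : dot (cis t) (cis t) = 1.
Proof. unfold dot, cis; simpl. pose proof (sin2_cos2 t). unfold Rsqr in H. lra. Qed.

Lemma O3_swap x y z : O3 x y z = - O3 z y x.
Proof. dpts. ring. Qed.

Lemma negneg x y : x < 0 -> y < 0 -> 0 < x*y.
Proof. intros. apply Rmult_neg_neg; auto. Qed.

Theorem mainTheorem4 (a b c d h : pt) :
  (exists t1 t2 t3 t4 : R,
      t1 < t2 /\ t2 < t3 /\ t3 < t4 /\ t4 < t1 + 2 * PI /\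
      ((a = cis t1 /\ b = cis t2 /\ c = cis t3 /\ d = cis t4) \/
       (a = cis t4 /\ b = cis t3 /\ c = cis t2 /\ d = cis t1))) ->
  ~ parallel a b c d ->
  (exists s : R, 0 < s /\ s < 1 /\ h = padd b (pscale s (psub c b))) ->
  let g := LIS a b c d in
  let j := LIS g h a c in
  let k := LIS g h b d in
  let l := LIS g h a d in
  vB2 h j = vB2 k l /\ vB2 h k = vB2 j l.
Proof.
  intros [t1 [t2 [t3 [t4 [T1 [T2 [T3 [T4 Hcase]]]]]]]] Hnp [s [Hs0 [Hs1 Hh]]].
  assert (HD : cross (psub b a) (psub d c) <> 0) by exact Hnp.
  destruct Hcase as [[-> [-> [-> ->]]] | [-> [-> [-> ->]]]].
  - pose proof (O3_cis t1 t2 t3 ltac:(lra) ltac:(lra) ltac:(lra)).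
    pose proof (O3_cis t1 t2 t4 ltac:(lra) ltac:(lra) ltac:(lra)).
    pose proof (O3_cis t1 t3 t4 ltac:(lra) ltac:(lra) ltac:(lra)).
    pose proof (O3_cis t2 t3 t4 ltac:(lra) ltac:(lra) ltac:(lra)).
    apply (config _ _ _ _ _ s); try apply dot_cis; auto;
      apply Rmult_lt_0_compat; auto.
  - pose proof (O3_cis t2 t3 t4 ltac:(lra) ltac:(lra) ltac:(lra)).
    pose proof (O3_cis t1 t3 t4 ltac:(lra) ltac:(lra) ltac:(lra)).
    pose proof (O3_cis t1 t2 t4 ltac:(lra) ltac:(lra) ltac:(lra)).
    pose proof (O3_cis t1 t2 t3 ltac:(lra) ltac:(lra) ltac:(lra)).
    apply (config _ _ _ _ _ s); try apply dot_cis; auto;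
      rewrite !(O3_swap (cis t4)), ?(O3_swap (cis t3)); apply negneg; lra.
Qed.
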